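(* Consider the parametric constraint system $g(p,x)\in C$ under the standing assumptions at $(\bar p,\bar x)\in\operatorname{gph}\Gamma$, let $\zeta:P\to\mathbb{R}$ be continuous at $\bar p$ and $D:=D^{\mathrm{Im}}_{p,\zeta}g(\bar p,\bar x)$. Assume that for every $v\in D$ and every $t_k\downarrow0$ there is $u\in\mathbb{R}^n$ with $\liminf_{k\to\infty}\operatorname{dist}(g(\bar p,\bar x)+t_k(v+\nabla_xg(\bar p,\bar x)u);C)/t_k=0$, and that for every $(v,u)\in D\times\mathbb{R}^n$, $(v,u)\ne(0,0)$, with $v+\nabla_xg(\bar p,\bar x)u\in T_C(g(\bar p,\bar x))$ the implication $$\big[\lambda\in N_C\big(g(\bar p,\bar x);v+\nabla_xg(\bar p,\bar x)u\big),\ \nabla_xg(\bar p,\bar x)^T\lambda=0\big]\Longrightarrow\lambda=0$$ holds. Then the system enjoys Robinson stability at $(\bar p,\bar x)$.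
   Context: $P$ is a topological space, $C\subset\mathbb{R}^l$ closed, $g:P\times\mathbb{R}^n\to\mathbb{R}^l$, $\Gamma(p)=\{x:g(p,x)\in C\}$. Standing assumptions: there are neighborhoods $U$ of $\bar x$ and $V$ of $\bar p$ such that for each $p\in V$ the map $g(p,\cdot)$ is continuously differentiable on $U$, and $g$, $\nabla_xg$ are continuous at $(\bar p,\bar x)$. Robinson stability at $(\bar p,\bar x)$: there exist $\kappa\ge0$ and neighborhoods $U$ of $\bar x$, $V$ of $\bar p$ with $\operatorname{dist}(x;\Gamma(p))\le\kappa\operatorname{dist}(g(p,x);C)$ for all $(p,x)\in V\times U$. Image derivative $D^{\mathrm{Im}}_{p,\zeta}g(\bar p,\bar x)$: the smallest closed cone containing $0$ and all $v$ for which there is a sequence $p_k\in P$ with $0<\|g(p_k,\bar x)-g(\bar p,\bar x)\|<1/k$, $\|\nabla_xg(p_k,\bar x)-\nabla_xg(\bar p,\bar x)\|<1/k$, $|\zeta(p_k)-\zeta(\bar p)|<1/k$, and $v=\lim_k(g(p_k,\bar x)-g(\bar p,\bar x))/\|g(p_k,\bar x)-g(\bar p,\bar x)\|$. $T_C$ is the contingent cone; $N_C(\bar z;w)=\{v:\exists t_k\downarrow0,w_k\to w,v_k\to v,\ \bar z+t_kw_k\in C,\ v_k\in\widehat N_C(\bar z+t_kw_k)\}$ is the directional limiting normal cone, $\widehat N_C$ the regular normal cone. *)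

(* Defs.v *)
From Stdlib Require Import Fin Reals Lra Lia Classical ClassicalEpsilon FunctionalExtensionality.
Open Scope R_scope.

Record Topology (P : Type) := {
  is_open : (P -> Prop) -> Prop;
  open_full : is_open (fun _ => True);
  open_inter : forall U V, is_open U -> is_open V -> is_open (fun x => U x /\ V x);
  open_union : forall F : (P -> Prop) -> Prop,
      (forall U, F U -> is_open U) -> is_open (fun x => exists U, F U /\ U x)
}.
Arguments is_open {P} _ _.

Definition cont_at {P : Type} (T : Topology P) (f : P -> R) (p0 : P) : Prop :=
  forall eps, 0 < eps ->
    exists W, is_open T W /\ W p0 /\ forall p, W p -> Rabs (f p - f p0) < eps.

Definition Vec (n : nat) := Fin.t n -> R.
Definition Mat (l n : nat) := Fin.t l -> Fin.t n -> R.

Fixpoint fsum (n : nat) : (Fin.t n -> R) -> R :=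
  match n return (Fin.t n -> R) -> R with
  | O => fun _ => 0
  | S m => fun f => f Fin.F1 + fsum m (fun i => f (Fin.FS i))
  end.

Definition vzero {n} : Vec n := fun _ => 0.
Definition vadd {n} (x y : Vec n) : Vec n := fun i => x i + y i.
Definition vsub {n} (x y : Vec n) : Vec n := fun i => x i - y i.
Definition vscale {n} (t : R) (x : Vec n) : Vec n := fun i => t * x i.
Definition dot {n} (x y : Vec n) : R := fsum n (fun i => x i * y i).
Definition norm {n} (x : Vec n) : R := sqrt (dot x x).

Definition mv {l n} (A : Mat l n) (u : Vec n) : Vec l :=
  fun i => fsum n (fun j => A i j * u j).
Definition mtv {l n} (A : Mat l n) (lam : Vec l) : Vec n :=
  fun j => fsum l (fun i => A i j * lam i).
Definition msub {l n} (A B : Mat l n) : Mat l n := fun i j => A i j - B i j.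
(** Frobenius norm (any matrix norm gives the same notions below) *)
Definition mnorm {l n} (A : Mat l n) : R :=
  sqrt (fsum l (fun i => fsum n (fun j => A i j * A i j))).

Definition is_closed {n} (S : Vec n -> Prop) : Prop :=
  forall w, ~ S w -> exists d, 0 < d /\ forall y, norm (vsub y w) < d -> ~ S y.

Definition is_cone {n} (K : Vec n -> Prop) : Prop :=
  forall v t, K v -> 0 <= t -> K (vscale t v).

Definition vcv {n} (u : nat -> Vec n) (v : Vec n) : Prop :=
  forall eps, 0 < eps -> exists N, forall k, (N <= k)%nat -> norm (vsub (u k) v) < eps.
(** t_k decreases to 0 in the sense t_k > 0, t_k -> 0 *)
Definition tends_down_0 (t : nat -> R) : Prop :=
  (forall k, 0 < t k) /\ Un_cv t 0.

Definition liminf_eq (a : nat -> R) (L : R) : Prop :=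
  forall eps, 0 < eps ->
    (exists N, forall k, (N <= k)%nat -> L - eps < a k) /\
    (forall N, exists k, (N <= k)%nat /\ a k < L + eps).

Definition is_dist {n} (S : Vec n -> Prop) (w : Vec n) (d : R) : Prop :=
  (forall y, S y -> d <= norm (vsub w y)) /\
  (forall eps, 0 < eps -> exists y, S y /\ norm (vsub w y) < d + eps).
(** dist(w;S) for nonempty S (value irrelevant/unspecified for empty S) *)
Definition setdist {n} (S : Vec n -> Prop) (w : Vec n) : R :=
  epsilon (inhabits 0) (fun d => is_dist S w d).
(** "dist(w;S) <= r" with the convention dist(w;emptyset) = +infinity *)
Definition dist_le {n} (S : Vec n -> Prop) (w : Vec n) (r : R) : Prop :=
  forall eps, 0 < eps -> exists y, S y /\ norm (vsub w y) <= r + eps.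

Definition has_deriv {n l} (f : Vec n -> Vec l) (x : Vec n) (A : Mat l n) : Prop :=
  forall eps, 0 < eps -> exists d, 0 < d /\ forall y, norm (vsub y x) < d ->
    norm (vsub (vsub (f y) (f x)) (mv A (vsub y x))) <= eps * norm (vsub y x).

(** Standing assumptions, with J p x = nabla_x g(p,x) *)
Definition standing_assumptions {P} (T : Topology P) {n l}
    (g : P -> Vec n -> Vec l) (J : P -> Vec n -> Mat l n) (pbar : P) (xbar : Vec n) : Prop :=
  exists r V, 0 < r /\ is_open T V /\ V pbar /\
    (forall p x, V p -> norm (vsub x xbar) < r ->
       has_deriv (g p) x (J p x) /\
       (forall eps, 0 < eps -> exists d, 0 < d /\ forall y,
          norm (vsub y xbar) < r -> norm (vsub y x) < d ->
          mnorm (msub (J p y) (J p x)) < eps)) /\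
    (forall eps, 0 < eps -> exists W d, is_open T W /\ W pbar /\ 0 < d /\
       forall p x, W p -> norm (vsub x xbar) < d ->
         norm (vsub (g p x) (g pbar xbar)) < eps) /\
    (forall eps, 0 < eps -> exists W d, is_open T W /\ W pbar /\ 0 < d /\
       forall p x, W p -> V p -> norm (vsub x xbar) < d -> norm (vsub x xbar) < r ->
         mnorm (msub (J p x) (J pbar xbar)) < eps).

Definition image_dir {P} {n l} (g : P -> Vec n -> Vec l) (J : P -> Vec n -> Mat l n)
    (zeta : P -> R) (pbar : P) (xbar : Vec n) (v : Vec l) : Prop :=
  exists pk : nat -> P,
    (forall k,
       0 < norm (vsub (g (pk k) xbar) (g pbar xbar)) /\
       norm (vsub (g (pk k) xbar) (g pbar xbar)) < / INR (S k) /\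
       (exists Ak, has_deriv (g (pk k)) xbar Ak /\
                   mnorm (msub Ak (J pbar xbar)) < / INR (S k)) /\
       Rabs (zeta (pk k) - zeta pbar) < / INR (S k)) /\
    vcv (fun k => vscale (/ norm (vsub (g (pk k) xbar) (g pbar xbar)))
                         (vsub (g (pk k) xbar) (g pbar xbar))) v.

Definition image_derivative {P} {n l} (g : P -> Vec n -> Vec l) (J : P -> Vec n -> Mat l n)
    (zeta : P -> R) (pbar : P) (xbar : Vec n) (w : Vec l) : Prop :=
  forall K : Vec l -> Prop, is_closed K -> is_cone K -> K vzero ->
    (forall v, image_dir g J zeta pbar xbar v -> K v) -> K w.

Definition tangent_cone {n} (C : Vec n -> Prop) (z : Vec n) (w : Vec n) : Prop :=
  exists (t : nat -> R) (wk : nat -> Vec n),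
    tends_down_0 t /\ vcv wk w /\ forall k, C (vadd z (vscale (t k) (wk k))).

Definition regular_normal {n} (C : Vec n -> Prop) (z : Vec n) (v : Vec n) : Prop :=
  C z /\ forall eps, 0 < eps -> exists d, 0 < d /\ forall z', C z' ->
    norm (vsub z' z) < d -> dot v (vsub z' z) <= eps * norm (vsub z' z).

Definition dir_normal {n} (C : Vec n -> Prop) (z w : Vec n) (v : Vec n) : Prop :=
  exists (t : nat -> R) (wk vk : nat -> Vec n),
    tends_down_0 t /\ vcv wk w /\ vcv vk v /\
    forall k, C (vadd z (vscale (t k) (wk k))) /\
              regular_normal C (vadd z (vscale (t k) (wk k))) (vk k).

Definition robinson_stable {P} (T : Topology P) {n l} (C : Vec l -> Prop)
    (g : P -> Vec n -> Vec l) (pbar : P) (xbar : Vec n) : Prop :=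
  exists kappa r V, 0 <= kappa /\ 0 < r /\ is_open T V /\ V pbar /\
    forall p x, V p -> norm (vsub x xbar) < r ->
      dist_le (fun y => C (g p y)) x (kappa * setdist C (g p x)).

(* Main.v *)
Require Import Defs.
From Stdlib Require Import Reals.
From Stdlib Require Import Fin Reals Lra Lia ZArith Classical ClassicalEpsilon FunctionalExtensionality.
From Stdlib Require Rtopology.
Open Scope R_scope.

Lemma fsum_ext n (f g : Fin.t n -> R) : (forall i, f i = g i) -> fsum n f = fsum n g.
Proof. induction n; simpl; intros H; [reflexivity|]. rewrite H, (IHn (fun i => f (FS i)) (fun i => g (FS i))); auto. Qed.

Lemma fsum_plus n (f g : Fin.t n -> R) : fsum n (fun i => f i + g i) = fsum n f + fsum n g.
Proof. induction n; simpl; [lra|]. rewrite (IHn (fun i => f (FS i)) (fun i => g (FS i))). lra. Qed.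

Lemma fsum_scal n c (f : Fin.t n -> R) : fsum n (fun i => c * f i) = c * fsum n f.
Proof. induction n; simpl; [ring|]. rewrite (IHn (fun i => f (FS i))). ring. Qed.

Lemma fsum_le n (f g : Fin.t n -> R) : (forall i, f i <= g i) -> fsum n f <= fsum n g.
Proof. induction n; simpl; intros H; [lra|]. specialize (IHn (fun i => f (FS i)) (fun i => g (FS i))). 
  pose proof (H F1). assert (fsum n (fun i => f (FS i)) <= fsum n (fun i => g (FS i))) by (apply IHn; auto). lra. Qed.

Lemma fsum_zero n : fsum n (fun _ => 0) = 0.
Proof. induction n; simpl; [lra|]. rewrite IHn; lra. Qed.

Lemma fsum_nonneg n (f : Fin.t n -> R) : (forall i, 0 <= f i) -> 0 <= fsum n f.
Proof. intros H. rewrite <- (fsum_zero n). apply fsum_le; auto. Qed.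

Lemma fsum_term n (f : Fin.t n -> R) : (forall i, 0 <= f i) -> forall i, f i <= fsum n f.
Proof. induction n; intros H i. - inversion i. 
  - apply (Fin.caseS' i (fun i => f i <= fsum (S n) f)); simpl.
    + pose proof (fsum_nonneg n (fun i => f (FS i)) (fun i => H (FS i))). lra.
    + intros j. pose proof (IHn (fun i => f (FS i)) (fun i => H (FS i)) j). pose proof (H F1). simpl in *. lra. Qed.

Lemma fsum_swap n m (F : Fin.t n -> Fin.t m -> R) :
  fsum n (fun i => fsum m (fun j => F i j)) = fsum m (fun j => fsum n (fun i => F i j)).
Proof. induction n; simpl. - rewrite fsum_zero; auto.
  - rewrite (IHn (fun i j => F (FS i) j)). rewrite <- fsum_plus. reflexivity. Qed.

Lemma fsum_opp n (f : Fin.t n -> R) : fsum n (fun i => - f i) = - fsum n f.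
Proof. rewrite <- (fsum_ext n (fun i => -1 * f i)) by (intros; ring). rewrite fsum_scal; ring. Qed.

Lemma fsum_minus n (f g : Fin.t n -> R) : fsum n (fun i => f i - g i) = fsum n f - fsum n g.
Proof. rewrite (fsum_ext n _ (fun i => f i + - g i)) by (intros; ring). rewrite fsum_plus, fsum_opp; ring. Qed.

Lemma dot_sym n (x y : Vec n) : dot x y = dot y x.
Proof. unfold dot; apply fsum_ext; intros; ring. Qed.
Lemma dot_nonneg n (x : Vec n) : 0 <= dot x x.
Proof. unfold dot; apply fsum_nonneg; intros; nra. Qed.
Lemma dot_add_r n (x y z : Vec n) : dot x (vadd y z) = dot x y + dot x z.
Proof. unfold dot, vadd. rewrite <- fsum_plus; apply fsum_ext; intros; ring. Qed.
Lemma dot_sub_r n (x y z : Vec n) : dot x (vsub y z) = dot x y - dot x z.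
Proof. unfold dot, vsub. rewrite <- fsum_minus; apply fsum_ext; intros; ring. Qed.
Lemma dot_scale_r n (x y : Vec n) t : dot x (vscale t y) = t * dot x y.
Proof. unfold dot, vscale. rewrite <- fsum_scal; apply fsum_ext; intros; ring. Qed.
Lemma dot_add_l n (x y z : Vec n) : dot (vadd y z) x = dot y x + dot z x.
Proof. rewrite dot_sym, dot_add_r, (dot_sym _ x y), (dot_sym _ x z); auto. Qed.
Lemma dot_sub_l n (x y z : Vec n) : dot (vsub y z) x = dot y x - dot z x.
Proof. rewrite dot_sym, dot_sub_r, (dot_sym _ x y), (dot_sym _ x z); auto. Qed.
Lemma dot_scale_l n (x y : Vec n) t : dot (vscale t y) x = t * dot y x.
Proof. rewrite dot_sym, dot_scale_r, dot_sym; auto. Qed.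

Lemma norm_nonneg n (x : Vec n) : 0 <= norm x.
Proof. apply sqrt_pos. Qed.
Lemma norm_sq n (x : Vec n) : norm x * norm x = dot x x.
Proof. apply sqrt_sqrt, dot_nonneg. Qed.
Lemma comp_le_norm n (x : Vec n) i : Rabs (x i) <= norm x.
Proof. unfold norm. rewrite <- sqrt_Rsqr_abs. apply sqrt_le_1_alt. unfold Rsqr, dot.
  apply (fsum_term n (fun i => x i * x i)). intros; nra. Qed.
Lemma norm_eq0 n (x : Vec n) : norm x = 0 -> forall i, x i = 0.
Proof. intros H i. pose proof (comp_le_norm n x i). pose proof (Rabs_pos (x i)).
  destruct (Req_dec (x i) 0); auto. pose proof (Rabs_pos_lt _ H2). lra. Qed.
Lemma norm_vzero n : norm (@vzero n) = 0.
Proof. unfold norm, dot, vzero. rewrite (fsum_ext n _ (fun _ => 0)) by (intros; ring). rewrite fsum_zero. apply sqrt_0. Qed.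
Lemma norm_eq0_v n (x : Vec n) : norm x = 0 -> x = vzero.
Proof. intros H; extensionality i; apply norm_eq0; auto. Qed.
Lemma le_norm_of_sq n (x : Vec n) a : 0 <= a -> dot x x <= a * a -> norm x <= a.
Proof. intros Ha H. unfold norm. rewrite <- (sqrt_square a Ha). apply sqrt_le_1_alt; auto. Qed.

Lemma cauchy_schwarz n (x y : Vec n) : dot x y <= norm x * norm y.
Proof.
  destruct (Req_dec (norm x) 0) as [Hx|Hx].
  { assert (dot x y = 0). { unfold dot. rewrite (fsum_ext n _ (fun _ => 0)). apply fsum_zero.
      intros i; rewrite (norm_eq0 n x Hx i); ring. } rewrite Hx; lra. }
  destruct (Req_dec (norm y) 0) as [Hy|Hy].
  { assert (dot x y = 0). { unfold dot. rewrite (fsum_ext n _ (fun _ => 0)). apply fsum_zero.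
      intros i; rewrite (norm_eq0 n y Hy i); ring. } rewrite Hy; lra. }
  pose proof (norm_nonneg n x); pose proof (norm_nonneg n y).
  set (X := norm x) in *. set (Y := norm y) in *.
  assert (HX : 0 < X) by lra. assert (HY : 0 < Y) by lra.
  pose proof (dot_nonneg n (vsub (vscale (/X) x) (vscale (/Y) y))) as HH0.
  rewrite dot_sub_l, !dot_sub_r, !dot_scale_l, !dot_scale_r in HH0.
  rewrite <- (norm_sq n x), <- (norm_sq n y), (dot_sym n y x) in HH0. fold X Y in HH0.
  assert (/X * (/X * (X * X)) = 1) by (field; lra).
  assert (/Y * (/Y * (Y * Y)) = 1) by (field; lra).
  assert (H3 : 0 <= 2 - 2 * (/X * /Y * dot x y)) by nra.
  assert (H4 : /X * /Y * dot x y <= 1) by lra.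
  apply (Rmult_le_compat_l (X*Y)) in H4; [|nra].
  replace (X * Y * (/ X * / Y * dot x y)) with (dot x y) in H4 by (field; lra). lra.
Qed.

Lemma cs_abs n (x y : Vec n) : Rabs (dot x y) <= norm x * norm y.
Proof. apply Rabs_le; split; [|apply cauchy_schwarz].
  pose proof (cauchy_schwarz n (vscale (-1) x) y). rewrite dot_scale_l in H.
  assert (norm (vscale (-1) x) = norm x).
  { unfold norm; f_equal. rewrite dot_scale_l, dot_scale_r; ring. } rewrite H0 in H; lra. Qed.

Lemma norm_scale n t (x : Vec n) : norm (vscale t x) = Rabs t * norm x.
Proof. unfold norm. rewrite dot_scale_l, dot_scale_r. rewrite <- Rmult_assoc.
  rewrite sqrt_mult_alt by nra. f_equal. rewrite <- sqrt_Rsqr_abs. reflexivity. Qed.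

Lemma norm_triangle n (x y : Vec n) : norm (vadd x y) <= norm x + norm y.
Proof. apply le_norm_of_sq. pose proof (norm_nonneg n x); pose proof (norm_nonneg n y); lra.
  rewrite dot_add_l, !dot_add_r. rewrite (dot_sym n y x). pose proof (cauchy_schwarz n x y).
  rewrite <- (norm_sq n x), <- (norm_sq n y). nra. Qed.


Lemma Rabs_m1 : Rabs (-1) = 1.
Proof. unfold Rabs; destruct (Rcase_abs (-1)); lra. Qed.

Ltac vext := let i := fresh "i" in extensionality i; unfold vadd, vsub, vscale, vzero, mv, msub; try ring.

Lemma norm_sub_sym n (x y : Vec n) : norm (vsub x y) = norm (vsub y x).
Proof. replace (vsub x y) with (vscale (-1) (vsub y x)) by vext. rewrite norm_scale, Rabs_m1; ring. Qed.

Lemma norm_sub_tri n (x y z : Vec n) : norm (vsub x z) <= norm (vsub x y) + norm (vsub y z).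
Proof. replace (vsub x z) with (vadd (vsub x y) (vsub y z)) by vext. apply norm_triangle. Qed.

Lemma norm_sub_le n (x y : Vec n) : norm (vsub x y) <= norm x + norm y.
Proof. replace (vsub x y) with (vadd x (vscale (-1) y)) by vext. eapply Rle_trans; [apply norm_triangle|].
  rewrite norm_scale, Rabs_m1; lra. Qed.

Lemma norm_rev_tri n (x y : Vec n) : Rabs (norm x - norm y) <= norm (vsub x y).
Proof. apply Rabs_le. split.
  - pose proof (norm_sub_tri n y x vzero). replace (vsub y vzero) with y in H by vext.
    replace (vsub x vzero) with x in H by vext.
    rewrite norm_sub_sym. lra.
  - pose proof (norm_sub_tri n x y vzero). replace (vsub x vzero) with x in H by vext.
    replace (vsub y vzero) with y in H by vext. lra. Qed.

Lemma norm_vadd_sub n (x y : Vec n) : vsub (vadd x y) x = y.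
Proof. vext. Qed.

Lemma mnorm_nonneg l n (A : Mat l n) : 0 <= mnorm A.
Proof. apply sqrt_pos. Qed.

Lemma mnorm_sq l n (A : Mat l n) : mnorm A * mnorm A = fsum l (fun i => fsum n (fun j => A i j * A i j)).
Proof. apply sqrt_sqrt. apply fsum_nonneg; intros; apply fsum_nonneg; intros; nra. Qed.

Lemma mv_bound l n (A : Mat l n) (u : Vec n) : norm (mv A u) <= mnorm A * norm u.
Proof. apply le_norm_of_sq. pose proof (mnorm_nonneg _ _ A); pose proof (norm_nonneg _ u); nra.
  replace (mnorm A * norm u * (mnorm A * norm u)) with ((mnorm A * mnorm A) * (norm u * norm u)) by ring.
  rewrite mnorm_sq, norm_sq. rewrite Rmult_comm, <- fsum_scal. unfold dot at 1. apply fsum_le. intros i.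
  unfold mv. change (fsum n (fun j => A i j * u j)) with (dot (fun j => A i j) u).
  pose proof (cs_abs n (fun j => A i j) u). pose proof (norm_nonneg n (fun j => A i j)).
  pose proof (norm_nonneg n u). pose proof (Rabs_pos (dot (fun j => A i j) u)).
  set (a := dot (fun j => A i j) u) in *. pose proof (Rsqr_abs a). unfold Rsqr in *.
  assert (Rabs a * Rabs a <= (norm (fun j => A i j) * norm u) * (norm (fun j => A i j) * norm u)) by (apply Rmult_le_compat; auto).
  replace ((norm (fun j => A i j) * norm u) * (norm (fun j => A i j) * norm u)) with
    ((norm (fun j => A i j) * norm (fun j => A i j)) * (norm u * norm u)) in H4 by ring.
  rewrite !norm_sq in H4. unfold dot in H4 |- *. nra.
Qed.

Definition mtr {l n} (A : Mat l n) : Mat n l := fun j i => A i j.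
Lemma mtv_mv l n (A : Mat l n) lam : mtv A lam = mv (mtr A) lam.
Proof. reflexivity. Qed.
Lemma mnorm_tr l n (A : Mat l n) : mnorm (mtr A) = mnorm A.
Proof. unfold mnorm, mtr. f_equal. rewrite fsum_swap. reflexivity. Qed.
Lemma mtv_bound l n (A : Mat l n) lam : norm (mtv A lam) <= mnorm A * norm lam.
Proof. rewrite mtv_mv, <- mnorm_tr. apply mv_bound. Qed.

Lemma dot_mv_mtv l n (A : Mat l n) lam u : dot lam (mv A u) = dot (mtv A lam) u.
Proof. unfold dot, mv, mtv.
  rewrite (fsum_ext l _ (fun i => fsum n (fun j => lam i * (A i j * u j)))) by (intros; rewrite fsum_scal; auto).
  rewrite fsum_swap. apply fsum_ext; intros j. rewrite Rmult_comm, <- fsum_scal. apply fsum_ext; intros; ring. Qed.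

Lemma mv_add l n (A : Mat l n) x y : mv A (vadd x y) = vadd (mv A x) (mv A y).
Proof. extensionality i. unfold mv, vadd. rewrite <- fsum_plus. apply fsum_ext; intros; ring. Qed.
Lemma mv_sub l n (A : Mat l n) x y : mv A (vsub x y) = vsub (mv A x) (mv A y).
Proof. extensionality i. unfold mv, vsub. rewrite <- fsum_minus. apply fsum_ext; intros; ring. Qed.
Lemma mv_scale l n (A : Mat l n) t x : mv A (vscale t x) = vscale t (mv A x).
Proof. extensionality i. unfold mv, vscale. rewrite <- fsum_scal. apply fsum_ext; intros; ring. Qed.
Lemma mv_msub l n (A B : Mat l n) x : mv (msub A B) x = vsub (mv A x) (mv B x).
Proof. extensionality i. unfold mv, vsub, msub. rewrite <- fsum_minus. apply fsum_ext; intros; ring. Qed.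
Lemma mtv_msub l n (A B : Mat l n) x : mtv (msub A B) x = vsub (mtv A x) (mtv B x).
Proof. extensionality i. unfold mtv, vsub, msub. rewrite <- fsum_minus. apply fsum_ext; intros; ring. Qed.
Lemma mtv_sub l n (A : Mat l n) x y : mtv A (vsub x y) = vsub (mtv A x) (mtv A y).
Proof. rewrite !mtv_mv. apply mv_sub. Qed.
Lemma msub_sym l n (A B : Mat l n) : mnorm (msub A B) = mnorm (msub B A).
Proof. unfold mnorm, msub. f_equal. apply fsum_ext; intros; apply fsum_ext; intros; ring. Qed.


Lemma inv_small eps : 0 < eps -> exists N, / INR (S N) < eps.
Proof. intros H. destruct (archimed (/eps)) as [H1 _]. pose proof (Rinv_0_lt_compat eps H).
  set (z := up (/eps)) in *.
  assert (Hz : (0 <= z)%Z) by (apply le_IZR; lra).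
  pose proof (IZR_le _ _ Hz). exists (Z.to_nat z). rewrite S_INR, INR_IZR_INZ, Z2Nat.id by auto.
  assert (/eps < IZR z + 1) by lra.
  pose proof (Rinv_lt_contravar (/eps) (IZR z + 1) ltac:(apply Rmult_lt_0_compat; lra) H3).
  rewrite Rinv_inv in H4. auto.
Qed.

Lemma inv_S_le a b : (a <= b)%nat -> / INR (S b) <= / INR (S a).
Proof. intros H. apply Rinv_le_contravar. apply lt_0_INR; lia. apply le_INR; lia. Qed.
Lemma inv_S_pos a : 0 < / INR (S a).
Proof. apply Rinv_0_lt_compat, lt_0_INR; lia. Qed.

Definition subseq (phi : nat -> nat) := forall k, (phi k < phi (S k))%nat.

Lemma subseq_mono phi : subseq phi -> forall k m, (k <= m)%nat -> (phi k <= phi m)%nat.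
Proof. intros H k m Hkm. induction Hkm; auto. specialize (H m). lia. Qed.
Lemma subseq_ge phi : subseq phi -> forall k, (k <= phi k)%nat.
Proof. intros H k. induction k; [lia|]. specialize (H k). lia. Qed.
Lemma subseq_comp phi psi : subseq phi -> subseq psi -> subseq (fun k => phi (psi k)).
Proof. intros H1 H2 k. specialize (H2 k). assert (S (psi k) <= psi (S k))%nat by lia.
  pose proof (subseq_mono phi H1 _ _ H). specialize (H1 (psi k)). lia. Qed.
Lemma subseq_shift phi N : subseq phi -> subseq (fun k => phi (k + N)%nat).
Proof. intros H k. apply H. Qed.

Lemma vcv_sub n (x : nat -> Vec n) v phi : vcv x v -> subseq phi -> vcv (fun k => x (phi k)) v.
Proof. intros H Hp eps He. destruct (H eps He) as [N HN]. exists N. intros k Hk. apply HN.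
  pose proof (subseq_ge phi Hp k). lia. Qed.
Lemma rcv_sub (u : nat -> R) l phi : Un_cv u l -> subseq phi -> Un_cv (fun k => u (phi k)) l.
Proof. intros H Hp eps He. destruct (H eps He) as [N HN]. exists N. intros k Hk. apply HN.
  pose proof (subseq_ge phi Hp k). lia. Qed.

Lemma cluster_subseq (d : nat -> R) :
  (forall eps N, 0 < eps -> exists k, (N <= k)%nat /\ d k < eps) ->
  exists phi, subseq phi /\ forall eps, 0 < eps -> exists N, forall k, (N <= k)%nat -> d (phi k) < eps.
Proof.
  intros H.
  assert (X : forall p : nat * nat, {k | (fst p <= k)%nat /\ d k < / INR (S (snd p))}).
  { intros p. apply constructive_indefinite_description. apply H. apply inv_S_pos. }
  pose (pick := fun m N => proj1_sig (X (N, m))).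
  assert (Hpick : forall m N, (N <= pick m N)%nat /\ d (pick m N) < / INR (S m)).
  { intros m N. unfold pick. destruct (X (N, m)); simpl; auto. }
  pose (phi := fix f k := match k with O => pick O O | S k => pick (S k) (S (f k)) end).
  exists phi. split.
  - intros k. simpl. destruct (Hpick (S k) (S (phi k))). lia.
  - intros eps He. destruct (inv_small eps He) as [N HN]. exists N. intros k Hk.
    assert (d (phi k) < / INR (S k)). { destruct k; simpl; apply Hpick. }
    pose proof (inv_S_le _ _ Hk). lra.
Qed.

Lemma BW_R (u : nat -> R) M : (forall k, Rabs (u k) <= M) ->
  exists phi l, subseq phi /\ Un_cv (fun k => u (phi k)) l.
Proof.
  intros H. destruct (Rtopology.Bolzano_Weierstrass u (fun c => -M <= c <= M) (Rtopology.compact_P3 (-M) M)) as [l Hl].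
  { intros k. specialize (H k). unfold Rabs in H. destruct (Rcase_abs (u k)); lra. }
  destruct (cluster_subseq (fun k => Rabs (u k - l))) as [phi [Hp Hc]].
  { intros eps N He. assert (Hn : Rtopology.neighbourhood (Rtopology.disc l (mkposreal eps He)) l)
      by (exists (mkposreal eps He); intros y Hy; auto).
    destruct (Hl _ N Hn) as [k [Hk Hv]]. exists k; split; auto. }
  exists phi, l. split; [exact Hp|]. intros eps He. destruct (Hc eps He) as [N HN]. exists N. intros k Hk.
  unfold R_dist. apply HN; auto.
Qed.

Lemma norm_cons_le n (x : Vec (S n)) : norm x <= Rabs (x F1) + norm (fun i => x (FS i)).
Proof. apply le_norm_of_sq. pose proof (Rabs_pos (x F1)); pose proof (norm_nonneg n (fun i => x (FS i))); lra.
  change (dot x x) with (x F1 * x F1 + dot (fun i => x (FS i)) (fun i => x (FS i))).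
  rewrite <- norm_sq. pose proof (Rsqr_abs (x F1)); unfold Rsqr in *.
  pose proof (Rabs_pos (x F1)); pose proof (norm_nonneg n (fun i => x (FS i))). nra. Qed.
Lemma norm_tail_le n (x : Vec (S n)) : norm (fun i => x (FS i)) <= norm x.
Proof. unfold norm. apply sqrt_le_1_alt. change (dot x x) with (x F1 * x F1 + dot (fun i => x (FS i)) (fun i => x (FS i))).
  nra. Qed.

Lemma BW_vec n (x : nat -> Vec n) M : (forall k, norm (x k) <= M) ->
  exists phi v, subseq phi /\ vcv (fun k => x (phi k)) v.
Proof.
  revert x M. induction n; intros x M H.
  - exists (fun k => k), vzero. split. intros k; lia. intros eps He. exists O. intros k _.
    unfold norm, dot. simpl. rewrite sqrt_0. auto.
  - destruct (BW_R (fun k => x k F1) M) as [phi1 [a [H1 Ha]]].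
    { intros k. eapply Rle_trans; [apply comp_le_norm|apply H]. }
    destruct (IHn (fun k => fun i => x (phi1 k) (FS i)) M) as [phi2 [t [H2 Ht]]].
    { intros k. eapply Rle_trans; [apply norm_tail_le|apply H]. }
    exists (fun k => phi1 (phi2 k)), (fun i => Fin.caseS' i (fun _ => R) a (fun j => t j)).
    split. apply subseq_comp; auto.
    intros eps He. destruct (rcv_sub _ _ _ Ha H2 (eps/2)) as [N1 HN1]; [lra|].
    destruct (Ht (eps/2)) as [N2 HN2]; [lra|]. exists (max N1 N2). intros k Hk.
    eapply Rle_lt_trans; [apply norm_cons_le|]. simpl.
    specialize (HN1 k ltac:(lia)). specialize (HN2 k ltac:(lia)). unfold R_dist in HN1.
    unfold vsub in *. simpl in *. lra.
Qed.


Lemma rcv_of_bound (u e : nat -> R) l N0 :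
  (forall k, (N0 <= k)%nat -> Rabs (u k - l) <= e k) -> Un_cv e 0 -> Un_cv u l.
Proof. intros H He eps Heps. destruct (He eps Heps) as [N HN]. exists (max N N0). intros k Hk.
  specialize (HN k ltac:(lia)). specialize (H k ltac:(lia)). unfold R_dist in *.
  rewrite Rminus_0_r in HN. pose proof (Rle_abs (e k)). lra. Qed.

Lemma rcv_abs0 (u : nat -> R) l : Un_cv u l -> Un_cv (fun k => Rabs (u k - l)) 0.
Proof. intros H eps He. destruct (H eps He) as [N HN]. exists N. intros k Hk. specialize (HN k Hk).
  unfold R_dist in *. rewrite Rminus_0_r, Rabs_Rabsolu. auto. Qed.

Lemma vcv_iff n (x : nat -> Vec n) v : vcv x v <-> Un_cv (fun k => norm (vsub (x k) v)) 0.
Proof. split; intros H eps He; destruct (H eps He) as [N HN]; exists N; intros k Hk; specialize (HN k Hk).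
  - unfold R_dist. rewrite Rminus_0_r, Rabs_right; auto. apply Rle_ge, norm_nonneg.
  - unfold R_dist in HN. rewrite Rminus_0_r, Rabs_right in HN; auto. apply Rle_ge, norm_nonneg. Qed.

Lemma vcv_of_bound n (x : nat -> Vec n) v e N0 :
  (forall k, (N0 <= k)%nat -> norm (vsub (x k) v) <= e k) -> Un_cv e 0 -> vcv x v.
Proof. intros H He. apply vcv_iff. apply (rcv_of_bound _ e _ N0); auto. intros k Hk.
  rewrite Rminus_0_r, Rabs_right; auto. apply Rle_ge, norm_nonneg. Qed.

Lemma rcv_const c : Un_cv (fun _ => c) c.
Proof. intros eps He. exists O. intros. unfold R_dist. rewrite Rminus_diag, Rabs_R0. auto. Qed.

Lemma vcv_add n (x y : nat -> Vec n) v w : vcv x v -> vcv y w -> vcv (fun k => vadd (x k) (y k)) (vadd v w).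
Proof. intros Hx Hy. apply vcv_iff in Hx, Hy. apply (vcv_of_bound _ _ _ (fun k => norm (vsub (x k) v) + norm (vsub (y k) w)) O).
  - intros k _. replace (vsub (vadd (x k) (y k)) (vadd v w)) with (vadd (vsub (x k) v) (vsub (y k) w)) by vext.
    apply norm_triangle.
  - replace 0 with (0+0) by ring. apply CV_plus; auto. Qed.

Lemma vcv_scale n (c : nat -> R) c0 (x : nat -> Vec n) v :
  Un_cv c c0 -> vcv x v -> vcv (fun k => vscale (c k) (x k)) (vscale c0 v).
Proof. intros Hc Hx. apply vcv_iff in Hx. apply rcv_abs0 in Hc. apply (vcv_of_bound _ _ _
   (fun k => Rabs (c k - c0) * (norm v + norm (vsub (x k) v)) + Rabs c0 * norm (vsub (x k) v)) O).
  - intros k _. replace (vsub (vscale (c k) (x k)) (vscale c0 v)) with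
      (vadd (vscale (c k - c0) (vadd v (vsub (x k) v))) (vscale c0 (vsub (x k) v))) by vext.
    eapply Rle_trans; [apply norm_triangle|]. rewrite !norm_scale. apply Rplus_le_compat_r.
    apply Rmult_le_compat_l; [apply Rabs_pos|apply norm_triangle].
  - replace 0 with (0 * (norm v + 0) + Rabs c0 * 0) by ring. apply CV_plus; apply CV_mult; auto.
    apply CV_plus; auto. apply rcv_const. apply rcv_const. Qed.

Lemma vcv_mv l n (A : Mat l n) (x : nat -> Vec n) v : vcv x v -> vcv (fun k => mv A (x k)) (mv A v).
Proof. intros Hx. apply vcv_iff in Hx. apply (vcv_of_bound _ _ _ (fun k => mnorm A * norm (vsub (x k) v)) O).
  - intros k _. rewrite <- mv_sub. apply mv_bound.
  - replace 0 with (mnorm A * 0) by ring. apply CV_mult; auto. apply rcv_const. Qed.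

Lemma vcv_norm n (x : nat -> Vec n) v : vcv x v -> Un_cv (fun k => norm (x k)) (norm v).
Proof. intros Hx. apply vcv_iff in Hx. apply (rcv_of_bound _ (fun k => norm (vsub (x k) v)) _ O); [|exact Hx]. intros k _. apply norm_rev_tri. Qed.

Lemma vcv_const n (v : Vec n) : vcv (fun _ => v) v.
Proof. intros eps He. exists O. intros. replace (vsub v v) with (@vzero n) by vext. rewrite norm_vzero; auto. Qed.

Lemma rcv_le (u : nat -> R) l M : Un_cv u l -> (forall k, u k <= M) -> l <= M.
Proof. intros H HM. destruct (Rle_dec l M); auto. exfalso. destruct (H (l - M)) as [N HN]; [lra|].
  specialize (HN N (le_n N)). specialize (HM N). unfold R_dist in HN. apply Rabs_def2 in HN. lra. Qed.
Lemma rcv_ge (u : nat -> R) l M : Un_cv u l -> (forall k, M <= u k) -> M <= l.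
Proof. intros H HM. destruct (Rle_dec M l); auto. exfalso. destruct (H (M - l)) as [N HN]; [lra|].
  specialize (HN N (le_n N)). specialize (HM N). unfold R_dist in HN. apply Rabs_def2 in HN. lra. Qed.
Lemma rcv_unique (u : nat -> R) l1 l2 : Un_cv u l1 -> Un_cv u l2 -> l1 = l2.
Proof. intros H1 H2. destruct (Req_dec l1 l2); auto. exfalso.
  assert (Hp : 0 < Rabs (l1 - l2)) by (apply Rabs_pos_lt; lra).
  destruct (H1 (Rabs (l1 - l2) / 2)) as [N1 HN1]. lra.
  destruct (H2 (Rabs (l1 - l2) / 2)) as [N2 HN2]. lra.
  specialize (HN1 (max N1 N2) ltac:(lia)); specialize (HN2 (max N1 N2) ltac:(lia)). unfold R_dist in *.
  pose proof (Rabs_triang (l1 - u (max N1 N2)) (u (max N1 N2) - l2)).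
  replace (l1 - u (max N1 N2) + (u (max N1 N2) - l2)) with (l1 - l2) in H0 by ring.
  rewrite <- Rabs_Ropp in HN1. replace (- (u (max N1 N2) - l1)) with (l1 - u (max N1 N2)) in HN1 by ring. lra. Qed.

Lemma exists_dist n (S : Vec n -> Prop) w : (exists y, S y) -> exists d, is_dist S w d.
Proof. intros [y0 Hy0].
  destruct (completeness (fun r => exists y, S y /\ r = - norm (vsub w y))) as [m [Hub Hlub]].
  - exists 0. intros r [y [_ ->]]. pose proof (norm_nonneg n (vsub w y)); lra.
  - exists (- norm (vsub w y0)). exists y0; auto.
  - exists (- m). split.
    + intros y Hy. assert (- norm (vsub w y) <= m) by (apply Hub; exists y; auto). lra.
    + intros eps He. apply NNPP. intros Hn. assert (m <= m - eps); [|lra].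
      apply Hlub. intros r [y [Hy ->]]. destruct (Rle_dec (- norm (vsub w y)) (m - eps)); auto.
      exfalso. apply Hn. exists y. split; auto. lra.
Qed.

Lemma setdist_spec n (S : Vec n -> Prop) w : (exists y, S y) -> is_dist S w (setdist S w).
Proof. intros H. unfold setdist. apply epsilon_spec. apply exists_dist; auto. Qed.

Lemma setdist_le n (S : Vec n -> Prop) w y : S y -> setdist S w <= norm (vsub w y).
Proof. intros H. apply (setdist_spec n S w (ex_intro _ y H)); auto. Qed.

Lemma setdist_nonneg n (S : Vec n -> Prop) w : (exists y, S y) -> 0 <= setdist S w.
Proof. intros H. destruct (Rle_dec 0 (setdist S w)); auto. exfalso.
  destruct (proj2 (setdist_spec n S w H) (- setdist S w)) as [y [_ Hy]]; [lra|].
  pose proof (norm_nonneg n (vsub w y)). lra. Qed.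

Lemma setdist_lip n (S : Vec n -> Prop) w w' : (exists y, S y) ->
  setdist S w <= setdist S w' + norm (vsub w w').
Proof. intros H. apply Rle_plus_epsilon. intros eps He.
  destruct (proj2 (setdist_spec n S w' H) eps He) as [y [Hy Hd]].
  pose proof (setdist_le n S w y Hy). pose proof (norm_sub_tri n w w' y). lra. Qed.

Lemma closed_limit n (S : Vec n -> Prop) (x : nat -> Vec n) v :
  is_closed S -> (forall k, S (x k)) -> vcv x v -> S v.
Proof. intros HS Hx Hv. apply NNPP. intros Hn. destruct (HS v Hn) as [d [Hd Hy]].
  destruct (Hv d Hd) as [N HN]. apply (Hy (x N)); auto. Qed.

Lemma proj_exists n (S : Vec n -> Prop) w : is_closed S -> (exists y, S y) ->
  exists c, S c /\ norm (vsub w c) = setdist S w.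
Proof. intros HS Hne. pose proof (setdist_spec n S w Hne) as [Hlow Hup].
  assert (X : forall k : nat, {y | S y /\ norm (vsub w y) < setdist S w + / INR (Datatypes.S k)}).
  { intros k. apply constructive_indefinite_description. apply Hup. apply inv_S_pos. }
  pose (y := fun k => proj1_sig (X k)).
  assert (Hy : forall k, S (y k) /\ norm (vsub w (y k)) < setdist S w + / INR (Datatypes.S k)).
  { intros k. unfold y. destruct (X k); auto. }
  destruct (BW_vec n y (norm w + setdist S w + 1)) as [phi [c [Hp Hc]]].
  { intros k. destruct (Hy k). pose proof (norm_sub_le n w (y k)).
    replace (y k) with (vsub w (vsub w (y k))) by vext.
    eapply Rle_trans; [apply norm_sub_le|]. pose proof (inv_S_le 0 k ltac:(lia)). change (INR 1) with 1 in H2.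
    rewrite Rinv_1 in H2. lra. }
  exists c. split.
  - apply (closed_limit n S (fun k => y (phi k))); auto. intros; apply Hy.
  - apply Rle_antisym; [|apply Hlow; apply (closed_limit n S (fun k => y (phi k))); auto; intros; apply Hy].
    apply Rle_plus_epsilon. intros eps He. destruct (Hc (eps/2)) as [N1 HN1]; [lra|].
    destruct (inv_small (eps/2)) as [N2 HN2]; [lra|].
    set (k := max N1 N2). specialize (HN1 k ltac:(lia)). destruct (Hy (phi k)) as [_ Hk].
    pose proof (inv_S_le N2 (phi k) ltac:(pose proof (subseq_ge phi Hp k); lia)).
    pose proof (norm_sub_tri n w (y (phi k)) c). lra.
Qed.


Lemma increment n l (f : Vec n -> Vec l) (A : Vec n -> Mat l n) (B : Mat l n) M x z :
  (forall t, 0 <= t <= 1 -> has_deriv f (vadd x (vscale t (vsub z x))) (A (vadd x (vscale t (vsub z x)))) /\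
                          mnorm (msub (A (vadd x (vscale t (vsub z x)))) B) <= M) ->
  norm (vsub (vsub (f z) (f x)) (mv B (vsub z x))) <= M * norm (vsub z x).
Proof.
  intros H. set (d := vsub z x). set (e := vsub (vsub (f z) (f x)) (mv B d)).
  set (y := fun t => vadd x (vscale t d)).
  pose (h := fun t => dot e (f (y t)) - t * dot e (mv B d)).
  pose (h' := fun t => dot e (mv (msub (A (y t)) B) d)).
  assert (HM : 0 <= M) by (destruct (H 0) as [_ HM]; [lra|]; pose proof (mnorm_nonneg _ _ (msub (A (vadd x (vscale 0 (vsub z x)))) B)); lra).
  assert (Hd : forall t, 0 <= t <= 1 -> derivable_pt_lim h t (h' t)).
  { intros t Ht eps He. destruct (H t Ht) as [Hder _]. fold d in Hder. fold (y t) in Hder.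
    set (K := norm e * norm d + 1).
    assert (HK : 0 < K) by (unfold K; pose proof (norm_nonneg _ e); pose proof (norm_nonneg _ d); nra).
    destruct (Hder (eps / K)) as [d0 [Hd0 Hy]]. apply Rdiv_lt_0_compat; auto.
    assert (Hdel : 0 < d0 / (norm d + 1)) by (pose proof (norm_nonneg _ d); apply Rdiv_lt_0_compat; lra).
    exists (mkposreal _ Hdel). intros hh Hh Hhh. simpl in Hhh.
    assert (Hyy : vsub (y (t + hh)) (y t) = vscale hh d) by (unfold y; vext).
    specialize (Hy (y (t + hh))). rewrite Hyy in Hy. rewrite norm_scale in Hy.
    assert (Habs : Rabs hh * norm d < d0).
    { pose proof (norm_nonneg _ d). pose proof (Rabs_pos hh).
      apply (Rmult_lt_compat_r (norm d + 1)) in Hhh; [|lra].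
      replace (d0 / (norm d + 1) * (norm d + 1)) with d0 in Hhh by (field; lra). nra. }
    specialize (Hy Habs).
    assert (Heq : (h (t + hh) - h t) / hh - h' t =
       dot e (vsub (vsub (f (y (t + hh))) (f (y t))) (mv (A (y t)) (vscale hh d))) / hh).
    { unfold h, h'. rewrite !dot_sub_r, mv_msub, dot_sub_r, mv_scale, dot_scale_r. field; auto. }
    rewrite Heq. unfold Rdiv. rewrite Rabs_mult, Rabs_inv.
    pose proof (cs_abs _ e (vsub (vsub (f (y (t + hh))) (f (y t))) (mv (A (y t)) (vscale hh d)))).
    pose proof (Rabs_pos_lt hh Hh). pose proof (norm_nonneg _ e). pose proof (norm_nonneg _ d).
    apply (Rle_lt_trans _ (norm e * (eps / K * (Rabs hh * norm d)) * / Rabs hh)).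
    { apply Rmult_le_compat_r. left; apply Rinv_0_lt_compat; auto.
      eapply Rle_trans; [apply H0|]. apply Rmult_le_compat_l; auto. }
    replace (norm e * (eps / K * (Rabs hh * norm d)) * / Rabs hh) with (eps * (norm e * norm d / K)) by (field; lra).
    assert (norm e * norm d / K < 1). { apply (Rmult_lt_reg_r K); auto. unfold Rdiv. rewrite Rmult_assoc, Rinv_l by lra. unfold K. lra. }
    nra. }
  destruct (MVT_cor2 h h' 0 1 Rlt_0_1 Hd) as [c [Hc Hc01]].
  assert (Hy1 : y 1 = z) by (unfold y, d; vext). assert (Hy0 : y 0 = x) by (unfold y, d; vext).
  assert (Hee : dot e e = h' c).
  { replace (h' c) with (h 1 - h 0) by (rewrite Hc; ring). unfold h. rewrite Hy1, Hy0.
    unfold e at 2. rewrite !dot_sub_r. ring. }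
  assert (Hbound : Rabs (h' c) <= norm e * (M * norm d)).
  { unfold h'. eapply Rle_trans; [apply cs_abs|]. apply Rmult_le_compat_l; [apply norm_nonneg|].
    eapply Rle_trans; [apply mv_bound|]. apply Rmult_le_compat_r; [apply norm_nonneg|].
    destruct (H c) as [_ Hm]; [lra|]. exact Hm. }
  rewrite <- Hee, <- norm_sq in Hbound. pose proof (norm_nonneg _ e). pose proof (norm_nonneg _ d).
  fold d e. destruct (Req_dec (norm e) 0) as [He0|He0]. rewrite He0. nra.
  rewrite Rabs_right in Hbound by nra. apply (Rmult_le_reg_l (norm e)). lra. lra.
Qed.


Lemma min_exists n (psi : Vec n -> R) c Rr L : 0 <= Rr -> 0 <= L ->
  (forall y, 0 <= psi y) ->
  (forall y y', norm (vsub y c) <= Rr -> norm (vsub y' c) <= Rr -> psi y <= psi y' + L * norm (vsub y y')) ->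
  exists z, norm (vsub z c) <= Rr /\ forall y, norm (vsub y c) <= Rr -> psi z <= psi y.
Proof.
  intros HR HL Hpos Hlip.
  destruct (completeness (fun r => exists y, norm (vsub y c) <= Rr /\ r = - psi y)) as [m [Hub Hlub]].
  - exists 0. intros r [y [_ ->]]. specialize (Hpos y); lra.
  - exists (- psi c). exists c. split; auto. replace (vsub c c) with (@vzero n) by vext. rewrite norm_vzero; auto.
  - assert (Hinf : forall y, norm (vsub y c) <= Rr -> - m <= psi y).
    { intros y Hy. assert (- psi y <= m) by (apply Hub; exists y; auto). lra. }
    assert (Happ : forall eps, 0 < eps -> exists y, norm (vsub y c) <= Rr /\ psi y < - m + eps).
    { intros eps He. apply NNPP. intros Hn. assert (m <= m - eps); [|lra].
      apply Hlub. intros r [y [Hy ->]]. destruct (Rle_dec (- psi y) (m - eps)); auto.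
      exfalso. apply Hn. exists y. split; auto. lra. }
    assert (X : forall k : nat, {y | norm (vsub y c) <= Rr /\ psi y < - m + / INR (S k)}).
    { intros k. apply constructive_indefinite_description. apply Happ. apply inv_S_pos. }
    pose (y := fun k => proj1_sig (X k)).
    assert (Hy : forall k, norm (vsub (y k) c) <= Rr /\ psi (y k) < - m + / INR (S k)).
    { intros k. unfold y. destruct (X k); auto. }
    destruct (BW_vec n y (norm c + Rr)) as [phi [z [Hp Hz]]].
    { intros k. destruct (Hy k). replace (y k) with (vadd (vsub (y k) c) c) by vext.
      eapply Rle_trans; [apply norm_triangle|]. lra. }
    assert (Hzc : norm (vsub z c) <= Rr).
    { apply (rcv_le (fun k => norm (vsub (y (phi k)) c))). 
      - apply vcv_norm. pose proof (vcv_add _ _ (fun _ => vscale (-1) c) z (vscale (-1) c) Hz (vcv_const _ (vscale (-1) c))) as Hz'.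
        replace (vsub z c) with (vadd z (vscale (-1) c)) by vext.
        replace (fun k => vsub (y (phi k)) c) with (fun k => vadd (y (phi k)) (vscale (-1) c)) by (extensionality k; vext). exact Hz'.
      - intros k; apply Hy. }
    exists z. split; auto. intros y0 Hy0. specialize (Hinf y0 Hy0).
    cut (psi z <= - m). lra.
    apply Rle_plus_epsilon. intros eps He.
    destruct (Hz (eps / (2 * (L + 1)))) as [N1 HN1]. apply Rdiv_lt_0_compat; lra.
    destruct (inv_small (eps/2)) as [N2 HN2]; [lra|].
    set (k := max N1 N2). specialize (HN1 k ltac:(lia)). destruct (Hy (phi k)) as [Hk1 Hk2].
    pose proof (inv_S_le N2 (phi k) ltac:(pose proof (subseq_ge phi Hp k); lia)).
    pose proof (Hlip z (y (phi k)) Hzc Hk1). rewrite norm_sub_sym in H0.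
    assert (L * norm (vsub (y (phi k)) z) <= eps / 2).
    { apply Rle_trans with ((L+1) * (eps / (2 * (L + 1)))). pose proof (norm_nonneg _ (vsub (y (phi k)) z)).
      apply Rmult_le_compat; lra. right; field; lra. }
    lra.
Qed.

Lemma mtv_scale l n (A : Mat l n) t x : mtv A (vscale t x) = vscale t (mtv A x).
Proof. rewrite !mtv_mv. apply mv_scale. Qed.

Lemma dot_sub_sq n (a b : Vec n) : dot (vsub a b) (vsub a b) = dot a a - 2 * dot a b + dot b b.
Proof. rewrite dot_sub_l, !dot_sub_r, (dot_sym _ b a). ring. Qed.
Lemma dot_add_sq n (a b : Vec n) : dot (vadd a b) (vadd a b) = dot a a + 2 * dot a b + dot b b.
Proof. rewrite dot_add_l, !dot_add_r, (dot_sym _ b a). ring. Qed.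

Lemma reg_normal_proj n (C : Vec n -> Prop) w c : C c -> 0 < norm (vsub w c) ->
  (forall z, C z -> norm (vsub w c) <= norm (vsub w z)) ->
  regular_normal C c (vscale (/ norm (vsub w c)) (vsub w c)).
Proof.
  intros Hc Hd Hmin. split; auto. intros eps He. exists (2 * norm (vsub w c) * eps). split. nra.
  intros z Hz Hzc. specialize (Hmin z Hz).
  assert (Hsq : norm (vsub w c) * norm (vsub w c) <= norm (vsub w z) * norm (vsub w z)).
  { pose proof (norm_nonneg _ (vsub w c)). apply Rmult_le_compat; auto. }
  replace (vsub w z) with (vsub (vsub w c) (vsub z c)) in Hsq by vext.
  rewrite (norm_sq _ (vsub (vsub w c) (vsub z c))) in Hsq. rewrite dot_sub_sq in Hsq.
  rewrite <- (norm_sq _ (vsub z c)), <- (norm_sq _ (vsub w c)) in Hsq.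
  rewrite dot_scale_l. set (D := norm (vsub w c)) in *. set (Z := norm (vsub z c)) in *.
  assert (dot (vsub w c) (vsub z c) <= Z * Z / 2) by lra.
  pose proof (norm_nonneg _ (vsub z c)). fold Z in H0.
  apply Rle_trans with (/ D * (Z * Z / 2)). apply Rmult_le_compat_l; auto. left; apply Rinv_0_lt_compat; auto.
  replace (/ D * (Z * Z / 2)) with (Z * (Z / (2 * D))) by (field; lra).
  rewrite (Rmult_comm eps). apply Rmult_le_compat_l; auto. apply (Rmult_le_reg_r (2 * D)). lra.
  replace (Z / (2 * D) * (2 * D)) with Z by (field; lra). lra.
Qed.


Lemma opt_grad n l (G : Vec n -> Vec l) (Jx : Mat l n) x' c s rho :
  has_deriv G x' Jx -> 0 < rho -> 0 <= s -> 0 < norm (vsub (G x') c) ->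
  (forall y, norm (vsub y x') < rho -> norm (vsub (G x') c) <= norm (vsub (G y) c) + s * norm (vsub y x')) ->
  norm (mtv Jx (vscale (/ norm (vsub (G x') c)) (vsub (G x') c))) <= s.
Proof.
  intros Hder Hrho Hs Hdel Hek.
  set (a := vsub (G x') c) in *. set (dl := norm a) in *.
  set (q := mtv Jx (vscale (/ dl) a)).
  destruct (Rle_dec (norm q) s) as [|Hq]; auto. exfalso.
  set (Q := norm q) in *. set (g := Q - s).
  assert (HQ : 0 < Q) by lra. assert (Hg : 0 < g) by (unfold g; lra).
  set (h := vscale (-1) q). assert (Hh : norm h = Q) by (unfold h; rewrite norm_scale, Rabs_m1; unfold Q; ring).
  set (eps := Rmin 1 (g/2)). assert (Heps : 0 < eps) by (apply Rmin_glb_lt; lra).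
  assert (Heps1 : eps <= 1) by apply Rmin_l. assert (Heps2 : eps <= g/2) by apply Rmin_r.
  destruct (Hder eps Heps) as [d0 [Hd0 Hd]].
  set (K := (mnorm Jx + 1) * (mnorm Jx + 1)). assert (HK : 0 <= K) by (unfold K; pose proof (mnorm_nonneg _ _ Jx); nra).
  set (T := Q * (1 + s + K) + 1). assert (HT : 0 < T) by (unfold T; nra).
  set (m := Rmin (Rmin d0 rho) (Rmin dl (g * dl / 2)) / 2).
  assert (Hm : 0 < m). { unfold m. apply Rdiv_lt_0_compat; [|lra]. assert (0 < g * dl / 2) by (apply Rdiv_lt_0_compat; [apply Rmult_lt_0_compat|]; lra). apply Rmin_glb_lt; apply Rmin_glb_lt; lra. }
  assert (Hm1 : m < d0) by (unfold m; pose proof (Rmin_l (Rmin d0 rho) (Rmin dl (g * dl / 2))); pose proof (Rmin_l d0 rho); lra).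
  assert (Hm2 : m < rho) by (unfold m; pose proof (Rmin_l (Rmin d0 rho) (Rmin dl (g * dl / 2))); pose proof (Rmin_r d0 rho); lra).
  assert (Hm3 : m < dl) by (unfold m; pose proof (Rmin_r (Rmin d0 rho) (Rmin dl (g * dl / 2))); pose proof (Rmin_l dl (g * dl / 2)); lra).
  assert (Hgdl : 0 < g * dl) by (apply Rmult_lt_0_compat; lra).
  assert (Hm4 : m < g * dl / 2) by (unfold m; pose proof (Rmin_r (Rmin d0 rho) (Rmin dl (g * dl / 2))); pose proof (Rmin_r dl (g * dl / 2)); lra).
  set (tau := m / T). assert (Htau : 0 < tau) by (unfold tau; apply Rdiv_lt_0_compat; lra).
  assert (Hbnd : forall X, 0 <= X <= T -> tau * X <= m).
  { intros X HX. unfold tau. apply (Rmult_le_reg_r T); auto. replace (m / T * X * T) with (m * X) by (field; lra). nra. }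
  assert (HtQ0 : 0 < tau * Q) by (apply Rmult_lt_0_compat; lra).
  assert (HtQ : tau * Q <= m) by (apply Hbnd; unfold T; split; nra).
  assert (HtQs : tau * (Q * s) <= m) by (apply Hbnd; unfold T; split; nra).
  assert (HtKQ : tau * (K * Q) <= m) by (apply Hbnd; unfold T; split; nra).
  set (y := vadd x' (vscale tau h)).
  assert (Hyx : vsub y x' = vscale tau h) by (unfold y; vext).
  assert (Hnyx : norm (vsub y x') = tau * Q) by (rewrite Hyx, norm_scale, Hh, Rabs_right; lra).
  specialize (Hek y ltac:(lra)). specialize (Hd y ltac:(lra)). rewrite Hnyx in Hek, Hd. rewrite Hyx in Hd.
  set (b := vsub (G y) (G x')) in *. set (r := vsub b (mv Jx (vscale tau h))) in *.
  assert (Hab : vsub (G y) c = vadd a b) by (unfold a, b; vext). rewrite Hab in Hek.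
  assert (Hbr : b = vadd (mv Jx (vscale tau h)) r) by (unfold r; vext).
  assert (Hdot1 : dot a (mv Jx (vscale tau h)) = - tau * dl * (Q * Q)).
  { rewrite dot_mv_mtv. assert (mtv Jx a = vscale dl q).
    { unfold q. rewrite mtv_scale. extensionality i. unfold vscale. field. lra. }
    rewrite H, dot_scale_l, dot_scale_r. unfold h. rewrite dot_scale_r. rewrite <- norm_sq. fold Q. ring. }
  assert (Hdot2 : Rabs (dot a r) <= dl * (eps * (tau * Q))).
  { eapply Rle_trans; [apply cs_abs|]. apply Rmult_le_compat_l; [apply norm_nonneg|]. auto. }
  assert (Hbn : norm b <= (mnorm Jx + 1) * (tau * Q)).
  { rewrite Hbr. eapply Rle_trans; [apply norm_triangle|].
    pose proof (mv_bound _ _ Jx (vscale tau h)). rewrite norm_scale, Hh, Rabs_right in H by lra.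
    pose proof (norm_nonneg _ (vscale tau h)). assert (0 <= tau * Q) by (apply Rmult_le_pos; lra). assert (eps * (tau * Q) <= 1 * (tau * Q)) by (apply Rmult_le_compat_r; lra). lra. }
  assert (Hsq : (dl - s * (tau * Q)) * (dl - s * (tau * Q)) <= norm (vadd a b) * norm (vadd a b)).
  { assert (0 <= dl - s * (tau * Q)) by nra. apply Rmult_le_compat; lra. }
  rewrite norm_sq, dot_add_sq, <- (norm_sq _ a), <- (norm_sq _ b) in Hsq. fold dl in Hsq.
  assert (Hab2 : dot a b = - tau * dl * (Q * Q) + dot a r) by (rewrite Hbr at 1; rewrite dot_add_r, Hdot1; auto).
  rewrite Hab2 in Hsq.
  assert (Hb2 : norm b * norm b <= K * ((tau * Q) * (tau * Q))).
  { pose proof (norm_nonneg _ b). unfold K. pose proof (mnorm_nonneg _ _ Jx).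
    replace ((mnorm Jx + 1) * (mnorm Jx + 1) * (tau * Q * (tau * Q))) with (((mnorm Jx + 1) * (tau * Q)) * ((mnorm Jx + 1) * (tau * Q))) by ring.
    apply Rmult_le_compat; auto. }
  assert (Hdot3 : - (dl * (eps * (tau * Q))) <= dot a r) by (pose proof (Rabs_Ropp (dot a r)); pose proof (Rle_abs (- dot a r)); lra). 
  assert (Hfin : 2 * tau * dl * (Q * Q) <= 2 * dl * s * (tau * Q) + 2 * dl * (eps * (tau * Q)) + K * ((tau * Q) * (tau * Q))).
  { assert (0 <= s*(tau*Q)*(s*(tau*Q))) by (apply Rmult_le_pos; apply Rmult_le_pos; lra). pose proof (Rle_abs (dot a r)). nra. }
  assert (Hkey : tau * Q * (g * dl - K * tau * Q) <= 0).
  { replace g with (Q - s) in * by reflexivity.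
    assert (2 * tau * dl * Q * (Q - s - eps) <= K * ((tau * Q) * (tau * Q))) by nra.
    assert (eps <= (Q - s) / 2) by lra. nra. }
  assert (0 < g * dl - K * tau * Q) by nra.
  assert (0 < tau * Q * (g * dl - K * tau * Q)) by (apply Rmult_lt_0_compat; nra).
  lra.
Qed.


Lemma norm_sub_self n (x : Vec n) : norm (vsub x x) = 0.
Proof. replace (vsub x x) with (@vzero n) by vext. apply norm_vzero. Qed.

Lemma ball_convex_le n (c y z : Vec n) R t : norm (vsub y c) <= R -> norm (vsub z c) <= R -> 0 <= t <= 1 ->
  norm (vsub (vadd y (vscale t (vsub z y))) c) <= R.
Proof. intros Hy Hz Ht. replace (vsub (vadd y (vscale t (vsub z y))) c) with
  (vadd (vscale (1 - t) (vsub y c)) (vscale t (vsub z c))) by vext.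
  eapply Rle_trans; [apply norm_triangle|]. rewrite !norm_scale, !Rabs_right by lra. nra. Qed.

Lemma ball_convex_lt n (c y z : Vec n) R t : norm (vsub y c) < R -> norm (vsub z c) < R -> 0 <= t <= 1 ->
  norm (vsub (vadd y (vscale t (vsub z y))) c) < R.
Proof. intros Hy Hz Ht. replace (vsub (vadd y (vscale t (vsub z y))) c) with
  (vadd (vscale (1 - t) (vsub y c)) (vscale t (vsub z c))) by vext.
  eapply Rle_lt_trans; [apply norm_triangle|]. rewrite !norm_scale, !Rabs_right by lra.
  set (a := norm (vsub y c)) in *. set (b := norm (vsub z c)) in *.
  set (m := Rmin (R - a) (R - b)). assert (0 < m) by (apply Rmin_glb_lt; lra).
  assert ((1 - t) * m <= (1 - t) * (R - a)) by (apply Rmult_le_compat_l; [lra|apply Rmin_l]).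
  assert (t * m <= t * (R - b)) by (apply Rmult_le_compat_l; [lra|apply Rmin_r]). nra. Qed.

Lemma setdist_zero_in n (C : Vec n -> Prop) w : is_closed C -> (exists y, C y) -> setdist C w = 0 -> C w.
Proof. intros HC Hne H0. destruct (proj_exists n C w HC Hne) as [c [Hc Hd]]. rewrite H0 in Hd.
  replace w with c; auto. extensionality i. pose proof (norm_eq0 _ _ Hd i). unfold vsub in H. lra. Qed.

Definition ek (k : nat) := / INR (S k).

Record dat (P : Type) (n l : nat) := Dat { dp : P; dx : Vec n; dc : Vec l; dlam : Vec l; ddl : R; ddJ : R }.
Arguments dp {P n l} _. Arguments dx {P n l} _. Arguments dc {P n l} _. Arguments dlam {P n l} _.
Arguments ddl {P n l} _. Arguments ddJ {P n l} _.

Definition good {P : Type} {n l : nat} (C : Vec l -> Prop) (g : P -> Vec n -> Vec l) (J : P -> Vec n -> Mat l n)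
  (pbar : P) (xbar : Vec n) (zeta : P -> R) (r0 : R) (k : nat) (d : dat P n l) : Prop :=
  0 < ddJ d /\ ddJ d <= r0 /\
  norm (vsub (g (dp d) xbar) (g pbar xbar)) < ek k /\
  norm (vsub (g (dp d) xbar) (g pbar xbar)) < ddJ d * ek k /\
  has_deriv (g (dp d)) xbar (J (dp d) xbar) /\
  mnorm (msub (J (dp d) xbar) (J pbar xbar)) < ek k /\
  Rabs (zeta (dp d) - zeta pbar) < ek k /\
  (forall y z, norm (vsub y xbar) < ddJ d -> norm (vsub z xbar) < ddJ d ->
     norm (vsub (vsub (g (dp d) z) (g (dp d) y)) (mv (J pbar xbar) (vsub z y))) <= ek k * norm (vsub z y)) /\
  norm (vsub (dx d) xbar) < ddJ d * ek k /\
  0 < ddl d /\ C (dc d) /\ norm (vsub (g (dp d) (dx d)) (dc d)) = ddl d /\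
  setdist C (g (dp d) (dx d)) = ddl d /\
  dlam d = vscale (/ ddl d) (vsub (g (dp d) (dx d)) (dc d)) /\
  regular_normal C (dc d) (dlam d) /\
  norm (mtv (J (dp d) (dx d)) (dlam d)) <= ek k /\
  mnorm (msub (J (dp d) (dx d)) (J pbar xbar)) < ek k /\
  (forall y, norm (vsub y xbar) <= r0 -> ddl d <= setdist C (g (dp d) y) + ek k * norm (vsub y (dx d))).

Lemma ek_pos k : 0 < ek k.
Proof. apply inv_S_pos. Qed.
Lemma ek_le1 k : ek k <= 1.
Proof. unfold ek. pose proof (inv_S_le 0 k ltac:(lia)). change (INR 1) with 1 in H. rewrite Rinv_1 in H. auto. Qed.
Lemma ek_INR k : INR (S k) * ek k = 1.
Proof. unfold ek. field. apply not_0_INR. lia. Qed.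


Lemma not_dist_le n (S : Vec n -> Prop) x rr : ~ dist_le S x rr ->
  exists eps0, 0 < eps0 /\ forall y, S y -> rr + eps0 < norm (vsub x y).
Proof. intros H. apply NNPP. intros Hn. apply H. intros eps He. apply NNPP. intros Hn2. apply Hn.
  exists eps. split; auto. intros y Hy. apply Rnot_le_lt. intros Hle. apply Hn2. exists y. split; auto. Qed.

Lemma stage1 (P : Type) (T : Topology P) (n l : nat)
  (C : Vec l -> Prop) (g : P -> Vec n -> Vec l) (J : P -> Vec n -> Mat l n)
  (pbar : P) (xbar : Vec n) (zeta : P -> R)
  (HC : is_closed C)
  (Hstand : standing_assumptions T g J pbar xbar)
  (Hgph : C (g pbar xbar))
  (Hzeta : cont_at T zeta pbar)
  (Hnrs : ~ robinson_stable T C g pbar xbar) :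
  exists r0, 0 < r0 /\ forall k, exists d, good C g J pbar xbar zeta r0 k d.
Proof.
  destruct Hstand as (r & V & Hr & HVo & HVp & Hdiff & Hgc & HJc).
  destruct (HJc 1 Rlt_0_1) as (W1 & d1 & HW1o & HW1p & Hd1 & HJ1).
  set (J0 := J pbar xbar). set (g0 := g pbar xbar).
  assert (Cne : exists y, C y) by (exists g0; auto).
  set (r0 := Rmin r d1 / 2).
  assert (Hr0 : 0 < r0) by (unfold r0; apply Rdiv_lt_0_compat; [apply Rmin_glb_lt|]; lra).
  assert (Hr0r : r0 < r) by (unfold r0; pose proof (Rmin_l r d1); lra).
  assert (Hr0d : r0 < d1) by (unfold r0; pose proof (Rmin_r r d1); lra).
  set (L0 := mnorm J0 + 1).
  assert (Hlip : forall p y z, V p -> W1 p -> norm (vsub y xbar) <= r0 -> norm (vsub z xbar) <= r0 ->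
             norm (vsub (g p z) (g p y)) <= L0 * norm (vsub z y)).
  { intros p y z HV HW Hy Hz.
    pose proof (increment n l (g p) (J p) J0 1 y z) as Hinc.
    assert (Hmain : norm (vsub (vsub (g p z) (g p y)) (mv J0 (vsub z y))) <= 1 * norm (vsub z y)).
    { apply Hinc. intros t Ht. pose proof (ball_convex_le n xbar y z r0 t Hy Hz Ht).
      split. apply Hdiff; auto; lra. left. apply HJ1; auto; lra. }
    replace (vsub (g p z) (g p y)) with (vadd (vsub (vsub (g p z) (g p y)) (mv J0 (vsub z y))) (mv J0 (vsub z y))) by vext.
    eapply Rle_trans; [apply norm_triangle|]. pose proof (mv_bound _ _ J0 (vsub z y)). unfold L0. lra. }
  exists r0. split; auto. intros k. set (e := ek k).
  assert (He : 0 < e) by apply ek_pos. assert (He1 : e <= 1) by apply ek_le1.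
  assert (HeS : INR (S k) * e = 1) by apply ek_INR.
  destruct (HJc e He) as (WJ & dJ0 & HWJo & HWJp & HdJ0 & HJe).
  set (dJ := Rmin dJ0 r0). assert (HdJ : 0 < dJ) by (apply Rmin_glb_lt; lra).
  assert (HdJ1 : dJ <= dJ0) by apply Rmin_l. assert (HdJ2 : dJ <= r0) by apply Rmin_r.
  set (eta := Rmin dJ 1 * e * e / 2).
  assert (Hm1 : 0 < Rmin dJ 1) by (apply Rmin_glb_lt; lra).
  assert (Hm2 : Rmin dJ 1 <= dJ) by apply Rmin_l. assert (Hm3 : Rmin dJ 1 <= 1) by apply Rmin_r.
  assert (Heta : 0 < eta) by (unfold eta; apply Rdiv_lt_0_compat; [repeat apply Rmult_lt_0_compat|]; lra).
  destruct (Hgc eta Heta) as (Wg & dg & HWgo & HWgp & Hdg & Hge).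
  destruct (Hzeta e He) as (Wz & HWzo & HWzp & Hze).
  set (V' := fun p => V p /\ (W1 p /\ (WJ p /\ (Wg p /\ Wz p)))).
  assert (HV'o : is_open T V').
  { unfold V'. apply (open_inter _ T V); auto. apply (open_inter _ T W1); auto.
    apply (open_inter _ T WJ); auto. apply (open_inter _ T Wg); auto. }
  assert (HV'p : V' pbar) by (unfold V'; tauto).
  set (rr := Rmin dg (dJ * e / 2)).
  assert (Hrr : 0 < rr) by (apply Rmin_glb_lt; [lra|]; apply Rdiv_lt_0_compat; [apply Rmult_lt_0_compat|]; lra).
  assert (Hrr1 : rr <= dg) by apply Rmin_l. assert (Hrr2 : rr <= dJ * e / 2) by apply Rmin_r.
  set (kap := INR (S k)). assert (Hkap : 0 < kap) by (apply lt_0_INR; lia).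
  destruct (classic (exists p x, V' p /\ norm (vsub x xbar) < rr /\
      ~ dist_le (fun y => C (g p y)) x (kap * setdist C (g p x)))) as [Hex|Hnex].
  2:{ exfalso. apply Hnrs. exists kap, rr, V'. split; [lra|]. split; auto. split; auto. split; auto.
      intros p x Hp Hx. apply NNPP. intros Hn. apply Hnex. exists p, x. auto. }
  destruct Hex as (p & x & Hp & Hx & Hndl).
  destruct Hp as (HpV & HpW1 & HpWJ & HpWg & HpWz).
  destruct (not_dist_le _ _ _ _ Hndl) as (eps0 & Heps0 & Hfar).
  set (ep := setdist C (g p x)) in *.
  assert (Hep0 : 0 <= ep) by (apply setdist_nonneg; auto).
  assert (Hxr : norm (vsub x xbar) < dJ * e / 2) by lra.
  assert (HdJe : dJ * e <= dJ) by (rewrite <- (Rmult_1_r dJ) at 2; apply Rmult_le_compat_l; lra).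
  assert (Hep1 : ep < eta).
  { eapply Rle_lt_trans. apply (setdist_le _ C _ g0 Hgph). apply Hge; auto. lra. }
  assert (Hep2 : 0 < ep).
  { destruct (Rle_lt_or_eq_dec 0 ep Hep0) as [|H0]; auto. exfalso.
    assert (C (g p x)) by (apply setdist_zero_in; auto).
    specialize (Hfar x H). rewrite norm_sub_self in Hfar. rewrite <- H0 in Hfar. lra. }
  set (rho := kap * ep). set (s := e).
  assert (Hrho : rho * s = ep). { unfold rho, s, kap. transitivity ((INR (S k) * e) * ep). ring. rewrite HeS. ring. }
  assert (Hrho2 : rho < dJ * e / 2).
  { unfold rho. apply Rlt_le_trans with (kap * eta). apply Rmult_lt_compat_l; auto.
    assert (kap * eta = (kap * e) * (Rmin dJ 1 * e / 2)) by (unfold eta; field).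
    rewrite H. unfold kap. rewrite HeS. assert (Rmin dJ 1 * e <= dJ * e) by (apply Rmult_le_compat_r; lra). lra. }
  (* Ekeland *)
  set (psi := fun y => setdist C (g p y) + s * norm (vsub y x)).
  destruct (min_exists n psi xbar r0 (L0 + s)) as (xk & Hxk & Hmin).
  - lra.
  - unfold L0. pose proof (mnorm_nonneg _ _ J0). unfold s. lra.
  - intros y. unfold psi. pose proof (setdist_nonneg _ C (g p y) Cne). pose proof (norm_nonneg _ (vsub y x)). unfold s. nra.
  - intros y y' Hy Hy'. unfold psi.
    pose proof (setdist_lip _ C (g p y) (g p y') Cne). pose proof (Hlip p y' y HpV HpW1 Hy' Hy).
    pose proof (norm_sub_tri _ y y' x). pose proof (norm_nonneg _ (vsub y y')). unfold s in *.
    assert (e * norm (vsub y x) <= e * norm (vsub y y') + e * norm (vsub y' x)) by nra. nra.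
  - assert (Hxin : norm (vsub x xbar) <= r0) by lra.
    assert (Hpx : psi xk <= ep). { specialize (Hmin x Hxin). unfold psi in *. rewrite norm_sub_self in Hmin. unfold ep. lra. }
    unfold psi in Hpx. set (dl := setdist C (g p xk)) in *.
    assert (Hdl0 : 0 <= dl) by (apply setdist_nonneg; auto).
    assert (Hxkx : norm (vsub xk x) <= rho).
    { apply (Rmult_le_reg_r s). unfold s; lra. rewrite Hrho. lra. }
    assert (Hxkb : norm (vsub xk xbar) < dJ * e).
    { pose proof (norm_sub_tri _ xk x xbar). lra. }
    assert (Hnotin : ~ C (g p xk)).
    { intros Hin. specialize (Hfar xk Hin). rewrite norm_sub_sym in Hxkx. fold ep rho in Hfar. lra. }
    assert (Hdl : 0 < dl).
    { destruct (Rle_lt_or_eq_dec 0 dl Hdl0) as [|H0]; auto. exfalso. apply Hnotin. apply setdist_zero_in; auto. }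
    destruct (proj_exists _ C (g p xk) HC Cne) as (c & Hc & Hcd). fold dl in Hcd.
    set (lam := vscale (/ dl) (vsub (g p xk) c)).
    assert (Hek : forall y, norm (vsub y xbar) <= r0 -> dl <= setdist C (g p y) + e * norm (vsub y xk)).
    { intros y Hy. specialize (Hmin y Hy). unfold psi in Hmin. fold dl in Hmin.
      pose proof (norm_sub_tri _ y xk x). unfold s in *. nra. }
    assert (HxkJ : norm (vsub xk xbar) < dJ) by lra.
    assert (Ha : norm (vsub (g p xbar) (g pbar xbar)) < eta) by (apply Hge; auto; rewrite norm_sub_self; lra).
    assert (Heta1 : eta <= e) by (unfold eta; assert (Rmin dJ 1 * e <= 1) by nra; nra).
    assert (Heta2 : eta <= dJ * e) by (unfold eta; assert (Rmin dJ 1 * e <= dJ) by nra; nra).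
    assert (Ha1 : norm (vsub (g p xbar) (g pbar xbar)) < ek k) by (fold e; lra).
    assert (Ha2 : norm (vsub (g p xbar) (g pbar xbar)) < dJ * ek k) by (fold e; lra).
    assert (Hdx : has_deriv (g p) xbar (J p xbar)) by (apply Hdiff; auto; rewrite norm_sub_self; lra).
    assert (HJx : mnorm (msub (J p xbar) (J pbar xbar)) < ek k) by (apply HJe; auto; rewrite norm_sub_self; lra).
    assert (Hzz : Rabs (zeta p - zeta pbar) < ek k) by (apply Hze; auto).
    assert (HG5 : forall y z, norm (vsub y xbar) < dJ -> norm (vsub z xbar) < dJ ->
       norm (vsub (vsub (g p z) (g p y)) (mv (J pbar xbar) (vsub z y))) <= ek k * norm (vsub z y)).
    { intros y z Hy Hz. apply (increment n l (g p) (J p) (J pbar xbar) (ek k)). intros t Ht. pose proof (ball_convex_lt n xbar y z dJ t Hy Hz Ht).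
      split. apply Hdiff; auto; lra. left. apply HJe; auto; lra. }
    assert (Hreg : regular_normal C c lam).
    { unfold lam. rewrite <- Hcd. apply reg_normal_proj; auto. rewrite Hcd; auto.
      intros z Hz. rewrite Hcd. apply setdist_le; auto. }
    assert (Hmtv : norm (mtv (J p xk) lam) <= ek k).
    { unfold lam. rewrite <- Hcd. apply (opt_grad n l (g p) (J p xk) xk c s (r0 - norm (vsub xk xbar))).
      - apply Hdiff; auto; lra.
      - lra.
      - unfold s; lra.
      - lra.
      - intros y Hy. assert (norm (vsub y xbar) <= r0) by (pose proof (norm_sub_tri _ y xk xbar); lra).
        rewrite Hcd. apply Rle_trans with (setdist C (g p y) + e * norm (vsub y xk)); [apply Hek; auto|]. unfold s. pose proof (setdist_le _ C (g p y) c Hc). lra. }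
    assert (HJxk : mnorm (msub (J p xk) (J pbar xbar)) < ek k) by (apply HJe; auto; lra).
    exists (Dat P n l p xk c lam dl dJ). unfold good; simpl.
    repeat split; auto; try lra.
    all: apply Hreg.
Qed.


Lemma choice_nat {A : Type} (Q : nat -> A -> Prop) : (forall k, exists a, Q k a) -> exists F, forall k, Q k (F k).
Proof. intros H. exists (fun k => proj1_sig (constructive_indefinite_description _ (H k))).
  intros k. destruct (constructive_indefinite_description _ (H k)); auto. Qed.

Lemma ek_cv : Un_cv ek 0.
Proof. intros eps He. destruct (inv_small eps He) as [N HN]. exists N. intros k Hk. unfold R_dist.
  rewrite Rminus_0_r, Rabs_right by (left; apply ek_pos). pose proof (inv_S_le N k Hk). unfold ek; lra. Qed.

Lemma ek_mono a b : (a <= b)%nat -> ek b <= ek a.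
Proof. apply inv_S_le. Qed.

Lemma rcv_inv (u : nat -> R) l : Un_cv u l -> 0 < l -> Un_cv (fun k => / u k) (/ l).
Proof. intros H Hl. destruct (H (l/2)) as [N0 HN0]; [lra|].
  apply (rcv_of_bound _ (fun k => Rabs (u k - l) * (2 / (l * l))) _ N0).
  - intros k Hk. specialize (HN0 k Hk). unfold R_dist in HN0. apply Rabs_def2 in HN0.
    assert (Huk : l / 2 < u k) by lra.
    replace (/ u k - / l) with ((l - u k) / (u k * l)) by (field; lra).
    unfold Rdiv. rewrite Rabs_mult, Rabs_inv, Rabs_minus_sym, (Rabs_right (u k * l)) by nra.
    apply Rmult_le_compat_l; [apply Rabs_pos|]. 
    apply (Rmult_le_reg_l (u k * l)). nra. rewrite Rinv_r by nra.
    apply (Rmult_le_reg_r (l * l)). nra. replace (u k * l * (2 * / (l * l)) * (l * l)) with (2 * u k * l) by (field; lra).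
    assert (0 < l * (2 * u k - l)) by (apply Rmult_lt_0_compat; lra). nra.
  - replace 0 with (0 * (2 / (l * l))) by ring. apply CV_mult. apply rcv_abs0; auto. apply rcv_const.
Qed.


Theorem corollary3p6 (P : Type) (T : Topology P) (n l : nat)
  (C : Vec l -> Prop) (g : P -> Vec n -> Vec l) (J : P -> Vec n -> Mat l n)
  (pbar : P) (xbar : Vec n) (zeta : P -> R)
  (HC : is_closed C)
  (Hstand : standing_assumptions T g J pbar xbar)
  (Hgph : C (g pbar xbar))
  (Hzeta : cont_at T zeta pbar)
  (H1 : forall v, image_derivative g J zeta pbar xbar v ->
        forall t : nat -> R, tends_down_0 t ->
        exists u : Vec n,
          liminf_eq (fun k => setdist C (vadd (g pbar xbar)
                        (vscale (t k) (vadd v (mv (J pbar xbar) u)))) / t k) 0)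
  (H2 : forall (v : Vec l) (u : Vec n),
        image_derivative g J zeta pbar xbar v ->
        ~ (v = vzero /\ u = vzero) ->
        tangent_cone C (g pbar xbar) (vadd v (mv (J pbar xbar) u)) ->
        forall lam : Vec l,
          dir_normal C (g pbar xbar) (vadd v (mv (J pbar xbar) u)) lam ->
          mtv (J pbar xbar) lam = vzero ->
          lam = vzero) :
  robinson_stable T C g pbar xbar.
Proof.
  apply NNPP; intros Hnrs.
  destruct (stage1 P T n l C g J pbar xbar zeta HC Hstand Hgph Hzeta Hnrs) as [r0 [Hr0 Hk]].
  destruct (choice_nat _ Hk) as [F HF]. clear Hk.
  assert (Cne : exists y, C y) by (exists (g pbar xbar); auto).
  set (L0 := mnorm (J pbar xbar) + 1). assert (HL0 : 1 <= L0) by (unfold L0; pose proof (mnorm_nonneg _ _ (J pbar xbar)); lra).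
  set (p := fun k => dp (F k)). set (xk := fun k => dx (F k)). set (c := fun k => dc (F k)).
  set (lam := fun k => dlam (F k)). set (dl := fun k => ddl (F k)). set (dJ := fun k => ddJ (F k)).
  set (a := fun k => vsub (g (p k) xbar) (g pbar xbar)). set (b := fun k => vsub (xk k) xbar).
  set (tau := fun k => norm (a k) + norm (b k)).
  set (Ev := fun k => vsub (vsub (g (p k) (xk k)) (g (p k) xbar)) (mv (J pbar xbar) (b k))).
  assert (HEv : forall k, norm (Ev k) <= ek k * norm (b k)).
  { intros k. destruct (HF k) as (G1&G2&G3&G4&G5&G6&G7&G8&G9&G10&G11&G12&G13&G14&G15&G16&G17&G18).
    unfold Ev, b. apply G8. rewrite norm_sub_self; auto. pose proof (ek_le1 k). pose proof (ek_pos k). 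
    assert (ddJ (F k) * ek k <= ddJ (F k)) by nra. unfold xk. lra. }
  assert (Htau : forall k, 0 < tau k /\ tau k < 2 * r0 * ek k /\ tau k < 2 * dJ k * ek k).
  { intros k. destruct (HF k) as (G1&G2&G3&G4&G5&G6&G7&G8&G9&G10&G11&G12&G13&G14&G15&G16&G17&G18).
    pose proof (ek_pos k). assert (ddJ (F k) * ek k <= r0 * ek k) by (apply Rmult_le_compat_r; lra).
    unfold tau, a, b, xk, p, dJ. split; [|split; lra].
    pose proof (norm_nonneg _ (vsub (g (dp (F k)) xbar) (g pbar xbar))). pose proof (norm_nonneg _ (vsub (dx (F k)) xbar)).
    destruct (Rle_lt_or_eq_dec 0 (norm (vsub (g (dp (F k)) xbar) (g pbar xbar)) + norm (vsub (dx (F k)) xbar))) as [|Hz]; [lra|auto|].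
    exfalso. assert (Ha0 : norm (vsub (g (dp (F k)) xbar) (g pbar xbar)) = 0) by lra.
    assert (Hb0 : norm (vsub (dx (F k)) xbar) = 0) by lra.
    assert (Hxe : dx (F k) = xbar) by (extensionality i; pose proof (norm_eq0 _ _ Hb0 i); unfold vsub in *; lra).
    assert (Hge : g (dp (F k)) xbar = (g pbar xbar)) by (extensionality i; pose proof (norm_eq0 _ _ Ha0 i); unfold vsub in *; lra).
    rewrite Hxe, Hge in G13. pose proof (setdist_le _ C (g pbar xbar) (g pbar xbar) Hgph) as Hs. rewrite norm_sub_self in Hs. lra. }
  assert (Hdl : forall k, 0 < dl k /\ dl k <= L0 * tau k).
  { intros k. destruct (HF k) as (G1&G2&G3&G4&G5&G6&G7&G8&G9&G10&G11&G12&G13&G14&G15&G16&G17&G18).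
    split; auto. unfold dl. rewrite <- G13. eapply Rle_trans; [apply (setdist_le _ C _ (g pbar xbar) Hgph)|].
    replace (vsub (g (dp (F k)) (dx (F k))) (g pbar xbar)) with (vadd (a k) (vadd (mv (J pbar xbar) (b k)) (Ev k))) by (unfold a, Ev, b, p, xk; extensionality i; unfold vadd, vsub; ring).
    eapply Rle_trans; [apply norm_triangle|]. eapply Rle_trans; [apply Rplus_le_compat_l, norm_triangle|].
    pose proof (mv_bound _ _ (J pbar xbar) (b k)). pose proof (HEv k). pose proof (ek_le1 k). pose proof (norm_nonneg _ (b k)).
    pose proof (norm_nonneg _ (a k)).
    assert (ek k * norm (b k) <= norm (b k)) by nra. pose proof (Rmult_le_pos _ _ (mnorm_nonneg _ _ (J pbar xbar)) (norm_nonneg _ (a k))). unfold tau, L0. lra. }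
  assert (Hlam1 : forall k, norm (lam k) = 1).
  { intros k. destruct (HF k) as (G1&G2&G3&G4&G5&G6&G7&G8&G9&G10&G11&G12&G13&G14&G15&G16&G17&G18).
    unfold lam. rewrite G14, norm_scale, G12, Rabs_right. field; lra. left; apply Rinv_0_lt_compat; auto. }
  set (alpha := fun k => vscale (/ tau k) (a k)).
  set (beta := fun k => vscale (/ tau k) (b k)).
  set (theta := fun k => dl k / tau k).
  assert (Hab1 : forall k, norm (alpha k) + norm (beta k) = 1).
  { intros k. destruct (Htau k) as [Ht _]. unfold alpha, beta. rewrite !norm_scale, Rabs_right.
    unfold tau in *. field. lra. left; apply Rinv_0_lt_compat; lra. }
  assert (Hth : forall k, 0 < theta k <= L0).
  { intros k. destruct (Htau k) as [Ht _]. destruct (Hdl k) as [Hd1 Hd2]. unfold theta. split.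
    apply Rdiv_lt_0_compat; auto. apply (Rmult_le_reg_r (tau k)); auto. unfold Rdiv.
    rewrite Rmult_assoc, Rinv_l by lra. lra. }
  destruct (BW_vec l lam 1) as (phi1 & lamI & Hp1 & Hl1). { intros; rewrite Hlam1; lra. }
  destruct (BW_vec l (fun k => alpha (phi1 k)) 1) as (phi2 & v' & Hp2 & Hv).
  { intros k; pose proof (Hab1 (phi1 k)); pose proof (norm_nonneg _ (beta (phi1 k))); lra. }
  destruct (BW_vec n (fun k => beta (phi1 (phi2 k))) 1) as (phi3 & u & Hp3 & Hu).
  { intros k; pose proof (Hab1 (phi1 (phi2 k))); pose proof (norm_nonneg _ (alpha (phi1 (phi2 k)))); lra. }
  destruct (BW_R (fun k => theta (phi1 (phi2 (phi3 k)))) L0) as (phi4 & th & Hp4 & Hth4).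
  { intros k. destruct (Hth (phi1 (phi2 (phi3 k)))). rewrite Rabs_right; lra. }
  set (Phi := fun k => phi1 (phi2 (phi3 (phi4 k)))).
  assert (HPhi : subseq Phi).
  { unfold Phi. apply (subseq_comp phi1 (fun k => phi2 (phi3 (phi4 k)))); auto.
    apply (subseq_comp phi2 (fun k => phi3 (phi4 k))); auto. apply subseq_comp; auto. }
  assert (HlamP : vcv (fun j => lam (Phi j)) lamI).
  { apply (vcv_sub _ _ _ (fun k => phi2 (phi3 (phi4 k))) Hl1).
    apply (subseq_comp phi2 (fun k => phi3 (phi4 k))); auto. apply subseq_comp; auto. }
  assert (HalP : vcv (fun j => alpha (Phi j)) v').
  { apply (vcv_sub _ _ _ (fun k => phi3 (phi4 k)) Hv). apply subseq_comp; auto. }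
  assert (HbeP : vcv (fun j => beta (Phi j)) u) by (apply (vcv_sub _ _ _ phi4 Hu); auto).
  assert (HthP : Un_cv (fun j => theta (Phi j)) th) by exact Hth4.
  assert (HgeP : forall j, (j <= Phi j)%nat) by (apply subseq_ge; auto).
  assert (HeP : forall j, ek (Phi j) <= ek j) by (intros j; apply ek_mono; auto).
  assert (HtauP : tends_down_0 (fun j => tau (Phi j))).
  { split. intros j; apply Htau. apply (rcv_of_bound _ (fun j => 2 * r0 * ek j) _ O).
    - intros j _. destruct (Htau (Phi j)) as (Ht1 & Ht2 & _). specialize (HeP j). rewrite Rminus_0_r, Rabs_right by lra.
      assert (2 * r0 * ek (Phi j) <= 2 * r0 * ek j) by (apply Rmult_le_compat_l; lra). lra.
    - replace 0 with (2 * r0 * 0) by ring. apply CV_mult. apply rcv_const. apply ek_cv. }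
  assert (HD : image_derivative g J zeta pbar xbar v').
  { intros K HK Hcone HK0 Hdir.
    destruct (Req_dec (norm v') 0) as [Hv0|Hv0].
    - rewrite (norm_eq0_v _ v' Hv0). auto.
    - pose proof (norm_nonneg _ v') as Hvn. assert (Hvp : 0 < norm v') by lra.
      destruct (HalP (norm v' / 2)) as [N HN]; [lra|].
      assert (Hsh : subseq (fun j => (j + N)%nat)) by (intros j; lia).
      assert (Halm : forall j, norm v' / 2 < norm (alpha (Phi (j + N)%nat))).
      { intros j. specialize (HN (j + N)%nat ltac:(lia)). pose proof (norm_sub_tri _ v' (alpha (Phi (j + N)%nat)) vzero).
        replace (vsub v' vzero) with v' in H by vext. replace (vsub (alpha (Phi (j + N)%nat)) vzero) with (alpha (Phi (j + N)%nat)) in H by vext.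
        rewrite norm_sub_sym in H. lra. }
      assert (Hdirv : Defs.image_dir g J zeta pbar xbar (vscale (/ norm v') v')).
      { exists (fun j => p (Phi (j + N)%nat)). split.
        - intros j. set (m := Phi (j + N)%nat).
          assert (Hmj : (j <= m)%nat) by (unfold m; specialize (HgeP (j+N)%nat); lia).
          pose proof (ek_mono _ _ Hmj) as Hem.
          destruct (HF m) as (G1&G2&G3&G4&G5&G6&G7&G8&G9&G10&G11&G12&G13&G14&G15&G16&G17&G18).
          assert (Ham : 0 < norm (a m)).
          { specialize (Halm j). fold m in Halm. unfold alpha in Halm. rewrite norm_scale in Halm.
            destruct (Htau m) as [Ht _]. pose proof (Rabs_pos (/ tau m)). pose proof (norm_nonneg _ (a m)).
            destruct (Rle_lt_or_eq_dec 0 (norm (a m)) H0) as [|He0]; auto. rewrite <- He0 in Halm. lra. }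
          unfold a, p in Ham. unfold ek in *. unfold p. split; [exact Ham|]. split; [lra|]. split.
          + exists (J (dp (F m)) xbar). split; [exact G5|]. lra.
          + lra.
        - assert (Heq : (fun j => vscale (/ norm (vsub (g (p (Phi (j + N)%nat)) xbar) (g pbar xbar))) (vsub (g (p (Phi (j + N)%nat)) xbar) (g pbar xbar)))
                 = (fun j => vscale (/ norm (alpha (Phi (j + N)%nat))) (alpha (Phi (j + N)%nat)))).
          { extensionality j. set (m := Phi (j + N)%nat). pose proof (Halm j) as Hj. fold m in Hj.
            destruct (Htau m) as [Ht _]. pose proof (Rinv_0_lt_compat _ Ht) as Hit.
            unfold alpha in Hj |- *. rewrite norm_scale, Rabs_right in Hj |- * by lra.
            assert (Hna : 0 < norm (a m)) by (pose proof (norm_nonneg _ (a m)); nra).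
            unfold a in Hna |- *. extensionality i. unfold vscale. field. split; lra. }
          rewrite Heq. apply vcv_scale.
          + apply rcv_inv; auto. apply vcv_norm. apply (vcv_sub _ (fun j => alpha (Phi j)) v' (fun j => (j + N)%nat)); auto.
          + apply (vcv_sub _ (fun j => alpha (Phi j)) v' (fun j => (j + N)%nat)); auto. }
      pose proof (Hcone _ (norm v') (Hdir _ Hdirv) (Rlt_le _ _ Hvp)).
      replace v' with (vscale (norm v') (vscale (/ norm v') v')) by (extensionality i; unfold vscale; field; lra). auto. }
  assert (Hne : ~ (v' = vzero /\ u = vzero)).
  { intros [Hv0 Hu0].
    assert (Hc1 : Un_cv (fun j => norm (alpha (Phi j)) + norm (beta (Phi j))) (norm v' + norm u))
      by (apply CV_plus; apply vcv_norm; auto).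
    replace (fun j => norm (alpha (Phi j)) + norm (beta (Phi j))) with (fun _ : nat => 1) in Hc1
      by (extensionality j; rewrite Hab1; auto).
    pose proof (rcv_unique _ _ _ Hc1 (rcv_const 1)). rewrite Hv0, Hu0, !norm_vzero in H. lra. }
  destruct (H1 v' HD (fun j => tau (Phi j)) HtauP) as [u' Hli].
  assert (Hth0 : th = 0).
  { apply Rle_antisym; [|apply (rcv_ge _ _ 0 HthP); intros; left; apply Hth].
    apply Rle_plus_epsilon. intros eps He. set (ep := eps / 5). assert (Hep : 0 < ep) by (unfold ep; lra).
    set (U := norm u'). assert (HU : 0 <= U) by apply norm_nonneg.
    destruct (HthP ep Hep) as [N1 HN1]. destruct (HalP ep Hep) as [N2 HN2].
    destruct (ek_cv (Rmin ep 1 / (2 * U + 1))) as [N3 HN3].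
    { apply Rdiv_lt_0_compat; [apply Rmin_glb_lt|]; lra. }
    destruct (proj2 (Hli ep Hep) (max N1 (max N2 N3))) as (j & Hj & Hf).
    specialize (HN1 j ltac:(lia)). specialize (HN2 j ltac:(lia)). specialize (HN3 j ltac:(lia)).
    unfold R_dist in HN1, HN3. rewrite Rminus_0_r, Rabs_right in HN3 by (left; apply ek_pos).
    set (m := Phi j) in *. pose proof (HeP j) as Hemj. fold m in Hemj.
    assert (Hek2 : ek m * (2 * U + 1) < Rmin ep 1).
    { apply (Rmult_lt_reg_r (/ (2 * U + 1))). apply Rinv_0_lt_compat; lra.
      rewrite Rmult_assoc, Rinv_r by lra. assert (ek m <= ek j) by auto. unfold Rdiv in HN3. lra. }
    pose proof (Rmin_l ep 1). pose proof (Rmin_r ep 1).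
    destruct (HF m) as (G1&G2&G3&G4&G5&G6&G7&G8&G9&G10&G11&G12&G13&G14&G15&G16&G17&G18).
    destruct (Htau m) as (Ht1 & Ht2 & Ht3). pose proof (ek_pos m) as Hem.
    set (y := vadd xbar (vscale (tau m) u')).
    assert (Hyx : vsub y xbar = vscale (tau m) u') by (unfold y; vext).
    assert (Hny : norm (vsub y xbar) = tau m * U) by (rewrite Hyx, norm_scale, Rabs_right; unfold U; lra).
    assert (HnydJ : norm (vsub y xbar) < ddJ (F m)).
    { rewrite Hny. unfold dJ in Ht3. assert (tau m * U <= 2 * ddJ (F m) * ek m * U) by (apply Rmult_le_compat_r; lra).
      assert (2 * ek m * U < 1) by nra. nra. }
    specialize (G18 y ltac:(lra)).
    set (Z := vadd (g pbar xbar) (vscale (tau m) (vadd v' (mv (J pbar xbar) u')))).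
    pose proof (setdist_lip _ C (g (dp (F m)) y) Z Cne) as Hlip.
    assert (HgZ : vsub (g (dp (F m)) y) Z = vadd (vscale (tau m) (vsub (alpha m) v'))
               (vsub (vsub (g (dp (F m)) y) (g (dp (F m)) xbar)) (mv (J pbar xbar) (vsub y xbar)))).
    { rewrite Hyx, mv_scale. unfold Z, alpha, a, p. extensionality i. unfold vadd, vsub, vscale. field. lra. }
    assert (HgZn : norm (vsub (g (dp (F m)) y) Z) <= tau m * ep + ek m * (tau m * U)).
    { rewrite HgZ. eapply Rle_trans; [apply norm_triangle|]. rewrite norm_scale, Rabs_right by lra.
      apply Rplus_le_compat. apply Rmult_le_compat_l; lra. rewrite <- Hny. apply G8; auto. rewrite norm_sub_self; lra. }
    assert (Hyxk : norm (vsub y (dx (F m))) <= tau m * (U + 1)).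
    { pose proof (norm_sub_tri _ y xbar (dx (F m))). rewrite (norm_sub_sym _ xbar) in H3.
      assert (norm (b m) <= tau m) by (unfold tau; pose proof (norm_nonneg _ (a m)); lra). unfold b, xk in H4. lra. }
    assert (HZ : setdist C Z < ep * tau m).
    { unfold Z. apply (Rmult_lt_reg_r (/ tau m)). apply Rinv_0_lt_compat; lra.
      rewrite Rmult_assoc, Rinv_r by lra. rewrite Rplus_0_l in Hf. unfold Rdiv in Hf. lra. }
    assert (Hdlm : dl m < tau m * (3 * ep)).
    { unfold dl. assert (ek m * (tau m * (U + 1)) + ek m * (tau m * U) <= tau m * ep).
      { replace (ek m * (tau m * (U + 1)) + ek m * (tau m * U)) with (tau m * (ek m * (2 * U + 1))) by ring.
        apply Rmult_le_compat_l; lra. }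
      pose proof (Rmult_le_compat_l (ek m) _ _ (Rlt_le _ _ Hem) Hyxk). lra. }
    assert (Hthm : theta m < 3 * ep).
    { unfold theta. apply (Rmult_lt_reg_r (tau m)); auto. unfold Rdiv. rewrite Rmult_assoc, Rinv_l by lra. lra. }
    apply Rabs_def2 in HN1. unfold ep in *. lra. }
  set (wv := fun k => vscale (/ tau k) (vsub (c k) (g pbar xbar))).
  assert (Hwid : forall k, wv k = vadd (vadd (alpha k) (mv (J pbar xbar) (beta k)))
                   (vsub (vscale (/ tau k) (Ev k)) (vscale (theta k) (lam k)))).
  { intros k. destruct (HF k) as (G1&G2&G3&G4&G5&G6&G7&G8&G9&G10&G11&G12&G13&G14&G15&G16&G17&G18).
    destruct (Htau k) as [Ht _]. unfold beta. rewrite mv_scale. unfold lam. rewrite G14.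
    unfold wv, alpha, theta, a, Ev, dl, c, p, xk. extensionality i. unfold vadd, vsub, vscale. field. lra. }
  assert (Hgw : forall k, vadd (g pbar xbar) (vscale (tau k) (wv k)) = c k).
  { intros k. destruct (Htau k) as [Ht _]. unfold wv. extensionality i. unfold vadd, vscale, vsub. field. lra. }
  assert (Hwcv : vcv (fun j => wv (Phi j)) (vadd v' (mv (J pbar xbar) u))).
  { replace (vadd v' (mv (J pbar xbar) u)) with (vadd (vadd v' (mv (J pbar xbar) u)) vzero) by vext.
    replace (fun j => wv (Phi j)) with (fun j => vadd (vadd (alpha (Phi j)) (mv (J pbar xbar) (beta (Phi j))))
                   (vsub (vscale (/ tau (Phi j)) (Ev (Phi j))) (vscale (theta (Phi j)) (lam (Phi j)))))
      by (extensionality j; rewrite Hwid; auto).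
    apply vcv_add. apply vcv_add; auto. apply vcv_mv; auto.
    apply (vcv_of_bound _ _ _ (fun j => ek j + Rabs (theta (Phi j) - th)) O).
    - intros j _. destruct (Htau (Phi j)) as [Ht _]. replace (vsub (vsub (vscale (/ tau (Phi j)) (Ev (Phi j)))
         (vscale (theta (Phi j)) (lam (Phi j)))) vzero) with (vsub (vscale (/ tau (Phi j)) (Ev (Phi j)))
         (vscale (theta (Phi j)) (lam (Phi j)))) by vext.
      eapply Rle_trans; [apply norm_sub_le|]. rewrite !norm_scale, Hlam1, Hth0, Rminus_0_r, Rmult_1_r.
      apply Rplus_le_compat_r. rewrite Rabs_right by (left; apply Rinv_0_lt_compat; auto).
      pose proof (HEv (Phi j)). pose proof (HeP j). pose proof (ek_pos (Phi j)).
      assert (norm (b (Phi j)) <= tau (Phi j)) by (unfold tau; pose proof (norm_nonneg _ (a (Phi j))); lra).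
      apply (Rmult_le_reg_l (tau (Phi j))); auto. rewrite <- Rmult_assoc, Rinv_r, Rmult_1_l by lra.
      pose proof (norm_nonneg _ (b (Phi j))).
      assert (ek (Phi j) * norm (b (Phi j)) <= ek (Phi j) * tau (Phi j)) by (apply Rmult_le_compat_l; lra).
      assert (ek (Phi j) * tau (Phi j) <= ek j * tau (Phi j)) by (apply Rmult_le_compat_r; lra). lra.
    - replace 0 with (0 + 0) by ring. apply CV_plus. apply ek_cv. apply rcv_abs0; auto. }
  assert (Htan : tangent_cone C (g pbar xbar) (vadd v' (mv (J pbar xbar) u))).
  { exists (fun j => tau (Phi j)), (fun j => wv (Phi j)). split; auto. split; auto.
    intros k. rewrite Hgw. destruct (HF (Phi k)) as (G1&G2&G3&G4&G5&G6&G7&G8&G9&G10&G11&G12&G13&G14&G15&G16&G17&G18).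
    exact G11. }
  assert (Hdn : dir_normal C (g pbar xbar) (vadd v' (mv (J pbar xbar) u)) lamI).
  { exists (fun j => tau (Phi j)), (fun j => wv (Phi j)), (fun j => lam (Phi j)). split; auto. split; auto. split; auto.
    intros k. rewrite Hgw. destruct (HF (Phi k)) as (G1&G2&G3&G4&G5&G6&G7&G8&G9&G10&G11&G12&G13&G14&G15&G16&G17&G18).
    split; [exact G11|exact G15]. }
  assert (Hmtv : mtv (J pbar xbar) lamI = vzero).
  { apply norm_eq0_v. apply Rle_antisym; [|apply norm_nonneg]. apply Rle_plus_epsilon. intros eps He.
    set (M0 := mnorm (J pbar xbar) + 1). assert (HM0 : 0 < M0) by (unfold M0; pose proof (mnorm_nonneg _ _ (J pbar xbar)); lra).
    destruct (HlamP (eps / (3 * M0))) as [N1 HN1]. apply Rdiv_lt_0_compat; lra.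
    destruct (ek_cv (eps / 3)) as [N2 HN2]. lra.
    set (j := max N1 N2). specialize (HN1 j ltac:(lia)). specialize (HN2 j ltac:(lia)).
    unfold R_dist in HN2. rewrite Rminus_0_r, Rabs_right in HN2 by (left; apply ek_pos).
    set (m := Phi j) in *. pose proof (HeP j) as Hem. fold m in Hem.
    destruct (HF m) as (G1&G2&G3&G4&G5&G6&G7&G8&G9&G10&G11&G12&G13&G14&G15&G16&G17&G18).
    replace (mtv (J pbar xbar) lamI) with (vadd (vadd (mtv (J pbar xbar) (vsub lamI (lam m)))
          (mtv (msub (J pbar xbar) (J (dp (F m)) (dx (F m)))) (lam m))) (mtv (J (dp (F m)) (dx (F m))) (lam m))).
    2:{ rewrite mtv_sub, mtv_msub. vext. }
    eapply Rle_trans; [apply norm_triangle|]. eapply Rle_trans; [apply Rplus_le_compat_r, norm_triangle|].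
    pose proof (mtv_bound _ _ (J pbar xbar) (vsub lamI (lam m))).
    pose proof (mtv_bound _ _ (msub (J pbar xbar) (J (dp (F m)) (dx (F m)))) (lam m)).
    rewrite Hlam1, msub_sym in H0. unfold lam in G16. rewrite norm_sub_sym in H.
    assert (mnorm (J pbar xbar) * norm (vsub (lam m) lamI) <= M0 * (eps / (3 * M0))).
    { apply Rmult_le_compat. apply mnorm_nonneg. apply norm_nonneg. unfold M0; lra. lra. }
    replace (M0 * (eps / (3 * M0))) with (eps / 3) in H3 by (field; lra). unfold lam in *. lra. }
  pose proof (H2 v' u HD Hne Htan lamI Hdn Hmtv) as Hl0.
  assert (Hc1 : Un_cv (fun j => norm (lam (Phi j))) (norm lamI)) by (apply vcv_norm; auto).
  replace (fun j => norm (lam (Phi j))) with (fun _ : nat => 1) in Hc1 by (extensionality j; rewrite Hlam1; auto).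
  pose proof (rcv_unique _ _ _ Hc1 (rcv_const 1)). rewrite Hl0, norm_vzero in H. lra.
Qed.
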